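(* Let $a\in C^2([0,T]\times[-\pi,\pi])$ solve $$\partial_t a+\Big(\int_{-\pi}^x a(t,\bar x)\,d\bar x\Big)\partial_x a-a^2+\frac1\pi\int_{-\pi}^{\pi}a^2\,dx=0,\qquad \int_{-\pi}^\pi a(t,x)dx=0,$$ and set $a_0=a(0,\cdot)$. Assume $a_0$ attains its maximum at an interior point $x_0^*\in(-\pi,\pi)$. Then for all $t\in[0,T]$, $x\mapsto a(t,x)$ attains its maximum at $x^*(t)$, the characteristic starting from $x_0^*$, and moreover $\partial_xa(t,x^*(t))=0$ and $\partial_x^2a(t,x^*(t))=\partial_x^2a_0(x_0^* )$.
   Context: The characteristic starting from $x_0^*$ is the solution of $\frac{d}{dt}x^*(t)=\int_{-\pi}^{x^*(t)}a(t,x)\,dx$, $x^*(0)=x_0^*$. *)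

(* Defs.v *)
From Stdlib Require Import Reals.
From Coquelicot Require Import Coquelicot.
Open Scope R_scope.

Definition dX (f : R -> R -> R) : R -> R -> R :=
  fun t x => Derive (fun y => f t y) x.
Definition dT (f : R -> R -> R) : R -> R -> R :=
  fun t x => Derive (fun s => f s x) t.

Definition in_rect (T t x : R) : Prop := 0 <= t <= T /\ - PI <= x <= PI.

Definition cont2 (f : R -> R -> R) (t x : R) : Prop :=
  continuous (fun p : R * R => f (fst p) (snd p)) (t, x).

Definition C1_on_rect (T : R) (f : R -> R -> R) : Prop :=
  forall t x, in_rect T t x ->
    ex_derive (fun y => f t y) x /\ ex_derive (fun s => f s x) t /\
    cont2 f t x /\ cont2 (dX f) t x /\ cont2 (dT f) t x.

Definition C2_on_rect (T : R) (a : R -> R -> R) : Prop :=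
  C1_on_rect T a /\ C1_on_rect T (dX a) /\ C1_on_rect T (dT a).

Definition solves_eq (T : R) (a : R -> R -> R) : Prop :=
  (forall t x, in_rect T t x ->
     dT a t x + RInt (fun y => a t y) (- PI) x * dX a t x - (a t x) ^ 2
       + / PI * RInt (fun y => (a t y) ^ 2) (- PI) PI = 0) /\
  (forall t, 0 <= t <= T -> RInt (fun y => a t y) (- PI) PI = 0).

Definition characteristic (T : R) (a : R -> R -> R) (x0 : R) (xs : R -> R) : Prop :=
  xs 0 = x0 /\
  (forall t, 0 <= t <= T ->
     filterlim xs (within (fun s => 0 <= s <= T) (locally t)) (locally (xs t))) /\
  (forall t, 0 <= t <= T -> - PI <= xs t <= PI) /\
  (forall t, 0 < t < T ->
     is_derive xs t (RInt (fun y => a t y) (- PI) (xs t))).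

Definition max_at (a : R -> R -> R) (t xt : R) : Prop :=
  forall x, - PI <= x <= PI -> a t x <= a t xt.

(* Main.v *)
Require Import Defs.
From Stdlib Require Import Reals Lra Lia Psatz.
From Coquelicot Require Import Coquelicot.
Open Scope R_scope.

Definition cw (T : R) (f : R -> R) (t : R) : Prop :=
  forall eps, 0 < eps -> exists del, 0 < del /\
    forall s, 0 <= s <= T -> Rabs (s - t) < del -> Rabs (f s - f t) < eps.

Lemma cw_of_filterlim T f t :
  filterlim f (within (fun s => 0 <= s <= T) (locally t)) (locally (f t)) -> cw T f t.
Proof.
  intros H eps He.
  assert (Hl : locally (f t) (fun y => Rabs (y - f t) < eps)).
  { exists (mkposreal eps He). intros y Hy. exact Hy. }
  specialize (H _ Hl). destruct H as [d Hd].
  exists d. split. apply cond_pos. intros s Hs Hst. apply Hd; [exact Hst| exact Hs].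
Qed.

Lemma filterlim_of_cw T f t : cw T f t ->
  filterlim f (within (fun s => 0 <= s <= T) (locally t)) (locally (f t)).
Proof.
  intros H P [e He]. destruct (H e (cond_pos e)) as [d [Hd Hd']].
  exists (mkposreal d Hd). intros s Hs HD. apply He. apply Hd'; auto.
Qed.

Lemma cw_cont T g t : continuity_pt g t -> cw T g t.
Proof.
  intros H eps He. destruct (H eps He) as [d [Hd Hd']].
  exists d. split; auto. intros s Hs Hst.
  destruct (Req_dec s t) as [->|Hne].
  - unfold Rminus. rewrite Rplus_opp_r, Rabs_R0. auto.
  - apply (Hd' s). split; [split; [exact I| auto] | exact Hst].
Qed.

Lemma cw_comp2 T f g h t : cw T f t -> cw T g t -> continuity_2d_pt h (f t) (g t) ->
  cw T (fun s => h (f s) (g s)) t.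
Proof.
  intros Hf Hg Hh eps He.
  destruct (Hh (mkposreal eps He)) as [d Hd].
  destruct (Hf d (cond_pos d)) as [d1 [Hd1 Hd1']].
  destruct (Hg d (cond_pos d)) as [d2 [Hd2 Hd2']].
  exists (Rmin d1 d2). split. apply Rmin_pos; auto.
  intros s Hs Hst. apply Hd.
  apply Hd1'; auto. apply Rlt_le_trans with (1 := Hst); apply Rmin_l.
  apply Hd2'; auto. apply Rlt_le_trans with (1 := Hst); apply Rmin_r.
Qed.

Lemma cw_comp1 T f h t : cw T f t -> continuity_pt h (f t) -> cw T (fun s => h (f s)) t.
Proof.
  intros Hf Hh.
  apply (cw_comp2 T f f (fun u _ => h u)); auto.
  apply (continuity_1d_2d_pt_comp h (fun u _ => u)); auto.
  apply continuity_2d_pt_id1.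
Qed.

Lemma cw_mult T f g t : cw T f t -> cw T g t -> cw T (fun s => f s * g s) t.
Proof.
  intros Hf Hg. apply (cw_comp2 T f g (fun u v => u * v)); auto.
  apply continuity_2d_pt_mult; [apply continuity_2d_pt_id1|apply continuity_2d_pt_id2].
Qed.

Lemma cw_minus T f g t : cw T f t -> cw T g t -> cw T (fun s => f s - g s) t.
Proof.
  intros Hf Hg. apply (cw_comp2 T f g (fun u v => u - v)); auto.
  apply continuity_2d_pt_minus; [apply continuity_2d_pt_id1|apply continuity_2d_pt_id2].
Qed.

Lemma cw_ext T f g t : (forall s, 0 <= s <= T -> f s = g s) -> 0 <= t <= T -> cw T f t -> cw T g t.
Proof.
  intros E Ht H eps He. destruct (H eps He) as [d [Hd Hd']]. exists d; split; auto.
  intros s Hs Hst. rewrite <- !E; auto.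
Qed.

Lemma cont_of_derive (f : R -> R) (x l : R) : is_derive f x l -> continuity_pt f x.
Proof.
  intros H. apply continuity_pt_filterlim.
  apply (ex_derive_continuous (K:=R_AbsRing) (V:=R_NormedModule)). exists l; exact H.
Qed.

Lemma D_mult (f g : R -> R) (x df dg : R) : is_derive f x df -> is_derive g x dg ->
  is_derive (fun t => f t * g t) x (df * g x + f x * dg).
Proof.
  intros Hf Hg. apply is_derive_Reals. apply is_derive_Reals in Hf. apply is_derive_Reals in Hg.
  apply (derivable_pt_lim_mult f g x df dg Hf Hg).
Qed.

Lemma D_comp (f g : R -> R) (x df dg : R) : is_derive f (g x) df -> is_derive g x dg ->
  is_derive (fun t => f (g t)) x (df * dg).
Proof.
  intros Hf Hg. apply is_derive_Reals. apply is_derive_Reals in Hf. apply is_derive_Reals in Hg.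
  apply (derivable_pt_lim_comp g f x dg df Hg Hf).
Qed.

Lemma D_ext (f g : R -> R) (x l l' : R) : (forall t, f t = g t) -> l = l' -> is_derive f x l -> is_derive g x l'.
Proof. intros E <- H. apply (is_derive_ext f g); auto. Qed.

Lemma mono_le (T : R) (f df : R -> R) : 0 < T -> (forall t, 0 <= t <= T -> cw T f t) ->
  (forall t, 0 < t < T -> is_derive f t (df t)) -> (forall t, 0 < t < T -> df t <= 0) ->
  forall t, 0 <= t <= T -> f t <= f 0.
Proof.
  intros HT Hc Hd Hs t Ht.
  destruct (Req_dec t 0) as [->|Ht0]; [lra|].
  apply Rnot_lt_le; intro Hlt.
  set (eps := (f t - f 0) / 4).
  assert (He : 0 < eps) by (unfold eps; lra).
  destruct (Hc 0 ltac:(lra) eps He) as [d0 [Hd0 Hd0']].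
  destruct (Hc t Ht eps He) as [dt [Hdt Hdt']].
  set (u := Rmin (d0/2) (t/2)).
  assert (Hu1 : 0 < u) by (apply Rmin_pos; lra).
  assert (Hu2 : u <= t/2) by apply Rmin_r.
  assert (Hu3 : u <= d0/2) by apply Rmin_l.
  set (v := t - Rmin (dt/2) ((t-u)/2)).
  assert (Hv1 : Rmin (dt/2) ((t-u)/2) <= (t-u)/2) by apply Rmin_r.
  assert (Hv2 : Rmin (dt/2) ((t-u)/2) <= dt/2) by apply Rmin_l.
  assert (Hv3 : 0 < Rmin (dt/2) ((t-u)/2)) by (apply Rmin_pos; lra).
  assert (Huv : u < v) by (unfold v; lra).
  destruct (MVT_gen f u v df) as [c [Hc1 Hc2]].
  - intros x Hx. rewrite Rmin_left in Hx by lra. rewrite Rmax_right in Hx by lra.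
    apply Hd. unfold v in Hx. lra.
  - intros x Hx. rewrite Rmin_left in Hx by lra. rewrite Rmax_right in Hx by lra.
    apply cont_of_derive with (df x). apply Hd. unfold v in Hx. lra.
  - rewrite Rmin_left in Hc1 by lra. rewrite Rmax_right in Hc1 by lra.
    assert (Hdc : df c <= 0) by (apply Hs; unfold v in Hc1; lra).
    assert (Hfuv : f v <= f u).
    { assert (df c * (v - u) <= 0) by nra. lra. }
    assert (A1 : Rabs (f u - f 0) < eps) by (apply Hd0'; [lra| rewrite Rminus_0_r, Rabs_pos_eq; lra]).
    assert (A2 : Rabs (f v - f t) < eps).
    { apply Hdt'. unfold v; lra. rewrite Rabs_left1; unfold v; lra. }
    apply Rabs_def2 in A1. apply Rabs_def2 in A2. unfold eps in *. lra.
Qed.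

Lemma exp_le x y : x <= y -> exp x <= exp y.
Proof. intros H. destruct (Rle_lt_or_eq_dec x y H) as [H0|H0]. left; apply exp_increasing; auto. subst; lra. Qed.

Definition qp (y : R) := Rmax y 0 * Rmax y 0.

Lemma qp_deriv y : is_derive qp y (2 * Rmax y 0).
Proof.
  destruct (Rlt_or_le 0 y) as [Hy|Hy].
  - rewrite Rmax_left by lra.
    apply (is_derive_ext_loc (fun z => z * z)).
    + exists (mkposreal y Hy). intros z Hz. unfold ball in Hz; simpl in Hz.
      unfold AbsRing_ball, abs, minus, plus, opp in Hz; simpl in Hz.
      apply Rabs_def2 in Hz. unfold qp. rewrite Rmax_left by lra. reflexivity.
    + auto_derive; auto. ring.
  - destruct (Req_dec y 0) as [->|Hy0].
    + apply is_derive_Reals. intros eps He. exists (mkposreal eps He). intros h Hh0 Hh.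
      simpl in Hh. unfold qp. rewrite Rplus_0_l.
      assert (Hz: Rmax 0 0 = 0) by (unfold Rmax; destruct Rle_dec; lra). rewrite Hz.
      assert (E: (Rmax h 0 * Rmax h 0 - 0*0)/h - 2*0 = Rmax h 0 * Rmax h 0 / h) by (field; auto).
      rewrite E.
      destruct (Rle_dec h 0); [rewrite Rmax_right by lra | rewrite Rmax_left by lra].
      * replace (0*0/h) with 0 by (field; auto). rewrite Rabs_R0; auto.
      * replace (h*h/h) with h by (field; auto). auto.
    + rewrite Rmax_right by lra.
      apply (is_derive_ext_loc (fun z => 0)).
      * assert (Hp : 0 < - y) by lra.
        exists (mkposreal (-y) Hp). intros z Hz. unfold ball in Hz; simpl in Hz.
        unfold AbsRing_ball, abs, minus, plus, opp in Hz; simpl in Hz.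
        apply Rabs_def2 in Hz. unfold qp. rewrite Rmax_right by lra. rewrite Rmult_0_l; reflexivity.
      * rewrite Rmult_0_r. apply (is_derive_const (K:=R_AbsRing) (V:=R_NormedModule)).
Qed.

Lemma D_opp (f : R -> R) (x l : R) : is_derive f x l -> is_derive (fun t => - f t) x (- l).
Proof.
  intros H. apply is_derive_Reals. apply is_derive_Reals in H.
  apply (derivable_pt_lim_opp f x l H).
Qed.

Lemma D_expl k x : is_derive (fun s => exp (k * s)) x (k * exp (k * x)).
Proof. auto_derive; auto. ring. Qed.

Lemma cw_exp T k t : cw T (fun s => exp (k * s)) t.
Proof. apply cw_cont. apply cont_of_derive with (k * exp (k * t)). apply D_expl. Qed.

Lemma GL_dec (T : R) (g c : R -> R) (K k : R) (phi : R -> R) (dphi : R -> R) :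
  0 < T ->
  (forall t, 0 <= t <= T -> cw T g t) ->
  (forall s, 0 < s < T -> is_derive g s (c s * g s)) ->
  (forall y, is_derive phi y (dphi y)) ->
  (forall s, 0 < s < T -> dphi (g s) * (c s * g s) * exp (k * s) + phi (g s) * (k * exp (k * s)) <= 0) ->
  forall t, 0 <= t <= T -> phi (g t) * exp (k * t) <= phi (g 0).
Proof.
  intros HT Hc Hd Hphi Hs t Ht.
  assert (E : phi (g 0) = phi (g 0) * exp (k * 0)) by (rewrite Rmult_0_r, exp_0; ring).
  rewrite E.
  apply (mono_le T (fun s => phi (g s) * exp (k * s))
     (fun s => dphi (g s) * (c s * g s) * exp (k * s) + phi (g s) * (k * exp (k * s)))); auto.
  - intros u Hu. apply cw_mult. apply cw_comp1. auto. apply cont_of_derive with (dphi (g u)); auto.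
    apply cw_exp.
  - intros s Hs'. apply (D_mult (fun s => phi (g s)) (fun s => exp (k * s))). apply (D_comp phi g); auto. apply D_expl.
Qed.

Lemma GL (T : R) (g c : R -> R) (K : R) :
  0 < T ->
  (forall t, 0 <= t <= T -> cw T g t) ->
  (forall s, 0 < s < T -> is_derive g s (c s * g s)) ->
  (forall s, 0 < s < T -> Rabs (c s) <= K) ->
  forall t, 0 <= t <= T ->
    g t * g t * exp (- (2 * K) * t) <= g 0 * g 0 /\
    g 0 * g 0 <= g t * g t * exp ((2 * K) * t) /\
    (0 <= g 0 -> 0 <= g t) /\ (g 0 <= 0 -> g t <= 0).
Proof.
  intros HT Hc Hd HK t Ht.
  assert (Hsq : forall y, is_derive (fun z => z * z) y (2 * y)).
  { intros y. auto_derive; auto. ring. }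
  assert (Hq : forall y, is_derive (fun z => - (z * z)) y (- (2 * y))).
  { intros y. auto_derive; auto. ring. }
  split; [|split; [|split]].
  - apply (GL_dec T g c K (-(2*K)) (fun z => z * z) (fun z => 2 * z)); auto.
    intros s Hs. specialize (HK s Hs). apply Rabs_le_between in HK.
    pose proof (exp_pos (-(2*K)*s)). pose proof (Rle_0_sqr (g s)). unfold Rsqr in *.
    assert (0 <= g s * g s * exp (-(2*K)*s)) by (apply Rmult_le_pos; lra).
    replace (2 * g s * (c s * g s) * exp (- (2 * K) * s) + g s * g s * (- (2 * K) * exp (- (2 * K) * s)))
      with (2 * (c s - K) * (g s * g s * exp (-(2*K)*s))) by ring. nra.
  - assert (H := GL_dec T g c K (2*K) (fun z => - (z * z)) (fun z => - (2 * z)) HT Hc Hd Hq).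
    assert (H' : - (g t * g t) * exp (2 * K * t) <= - (g 0 * g 0)).
    { apply H; auto. intros s Hs. specialize (HK s Hs). apply Rabs_le_between in HK.
      pose proof (exp_pos (2*K*s)). pose proof (Rle_0_sqr (g s)). unfold Rsqr in *.
      assert (0 <= g s * g s * exp (2*K*s)) by (apply Rmult_le_pos; lra).
      replace (- (2 * g s) * (c s * g s) * exp (2 * K * s) + - (g s * g s) * (2 * K * exp (2 * K * s)))
        with (- (2 * (c s + K)) * (g s * g s * exp (2*K*s))) by ring. nra. }
    lra.
  - intros H0.
    assert (H := GL_dec T (fun s => - g s) c K (-(2*K)) qp (fun y => 2 * Rmax y 0) HT).
    assert (H' : qp (- g t) * exp (-(2*K) * t) <= qp (- g 0)).
    { apply H; auto.
      - intros u Hu. apply cw_comp1 with (h := fun z => - z). auto. apply continuity_pt_opp, continuity_pt_id.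
      - intros s Hs. apply D_ext with (f := fun t => - g t) (l := - (c s * g s)); auto. ring.
        apply D_opp; auto.
      - apply qp_deriv.
      - intros s Hs. specialize (HK s Hs). apply Rabs_le_between in HK.
        pose proof (exp_pos (-(2*K)*s)). unfold qp.
        assert (Em : Rmax (- g s) 0 * (- g s) = Rmax (- g s) 0 * Rmax (- g s) 0).
        { unfold Rmax; destruct (Rle_dec (- g s) 0); nra. }
        pose proof (Rle_0_sqr (Rmax (- g s) 0)). unfold Rsqr in *.
        replace (2 * Rmax (- g s) 0 * (c s * - g s) * exp (-(2*K) * s))
          with (2 * c s * (Rmax (- g s) 0 * (- g s)) * exp (-(2*K) * s)) by ring.
        rewrite Em.
        assert (0 <= Rmax (- g s) 0 * Rmax (- g s) 0 * exp (-(2*K)*s)) by (apply Rmult_le_pos; lra).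
        nra. }
    unfold qp in H'. rewrite (Rmax_right (- g 0)) in H' by lra.
    pose proof (exp_pos (-(2*K)*t)).
    destruct (Rle_dec (- g t) 0) as [Hl|Hl]; [lra|].
    rewrite Rmax_left in H' by lra.
    assert (0 < (- g t) * (- g t)) by nra.
    assert (0 < (- g t) * (- g t) * exp (-(2*K)*t)) by (apply Rmult_lt_0_compat; lra). lra.
  - intros H0.
    assert (H := GL_dec T g c K (-(2*K)) qp (fun y => 2 * Rmax y 0) HT Hc Hd qp_deriv).
    assert (H' : qp (g t) * exp (-(2*K) * t) <= qp (g 0)).
    { apply H; auto.
      intros s Hs. specialize (HK s Hs). apply Rabs_le_between in HK.
      pose proof (exp_pos (-(2*K)*s)). unfold qp.
      assert (Em : Rmax (g s) 0 * (g s) = Rmax (g s) 0 * Rmax (g s) 0).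
      { unfold Rmax; destruct (Rle_dec (g s) 0); nra. }
      pose proof (Rle_0_sqr (Rmax (g s) 0)). unfold Rsqr in *.
      replace (2 * Rmax (g s) 0 * (c s * g s) * exp (-(2*K) * s))
        with (2 * c s * (Rmax (g s) 0 * g s) * exp (-(2*K) * s)) by ring.
      rewrite Em.
      assert (0 <= Rmax (g s) 0 * Rmax (g s) 0 * exp (-(2*K)*s)) by (apply Rmult_le_pos; lra).
      nra. }
    unfold qp in H'. rewrite (Rmax_right (g 0)) in H' by lra.
    pose proof (exp_pos (-(2*K)*t)).
    destruct (Rle_dec (g t) 0) as [Hl|Hl]; [lra|].
    rewrite Rmax_left in H' by lra.
    assert (0 < (g t) * (g t)) by nra.
    assert (0 < (g t) * (g t) * exp (-(2*K)*t)) by (apply Rmult_lt_0_compat; lra). lra.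
Qed.

Lemma GL_abs (T : R) (g c : R -> R) (K : R) :
  0 < T -> 0 <= K ->
  (forall t, 0 <= t <= T -> cw T g t) ->
  (forall s, 0 < s < T -> is_derive g s (c s * g s)) ->
  (forall s, 0 < s < T -> Rabs (c s) <= K) ->
  forall t, 0 <= t <= T ->
    Rabs (g t) <= Rabs (g 0) * exp (K * t) /\
    Rabs (g 0) * exp (- (K * t)) <= Rabs (g t) /\
    Rabs (g t - g 0) <= Rabs (g 0) * (exp (K * T) - 1).
Proof.
  intros HT HK0 Hc Hd HK t Ht.
  destruct (GL T g c K HT Hc Hd HK t Ht) as [H1 [H2 [H3 H4]]].
  set (A := exp (K * t)). set (Ai := exp (- (K * t))).
  assert (HA : A * Ai = 1) by (unfold A, Ai; rewrite <- exp_plus, Rplus_opp_r, exp_0; auto).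
  assert (HA1 : 1 <= A) by (unfold A; rewrite <- exp_0; apply exp_le; nra).
  assert (HAE : A <= exp (K * T)) by (unfold A; apply exp_le; nra).
  assert (HAi : 0 < Ai) by apply exp_pos.
  assert (E1 : exp (- (2 * K) * t) = Ai * Ai) by (unfold Ai; rewrite <- exp_plus; f_equal; ring).
  assert (E2 : exp (2 * K * t) = A * A) by (unfold A; rewrite <- exp_plus; f_equal; ring).
  rewrite E1 in H1. rewrite E2 in H2.
  assert (B1 : Rabs (g t) <= Rabs (g 0) * A).
  { assert (Hq : Rabs (g t * Ai) <= Rabs (g 0)).
    { apply Rsqr_le_abs_0. unfold Rsqr. nra. }
    rewrite Rabs_mult, (Rabs_pos_eq Ai) in Hq by lra.
    assert (Rabs (g t) = Rabs (g t) * Ai * A) by (rewrite Rmult_assoc, (Rmult_comm Ai), HA; ring).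
    rewrite H. apply Rmult_le_compat_r; lra. }
  assert (B2 : Rabs (g 0) * Ai <= Rabs (g t)).
  { assert (Hq : Rabs (g 0) <= Rabs (g t * A)).
    { apply Rsqr_le_abs_0. unfold Rsqr. nra. }
    rewrite Rabs_mult, (Rabs_pos_eq A) in Hq by lra.
    assert (Rabs (g t) = Rabs (g t) * A * Ai) by (rewrite Rmult_assoc, HA; ring).
    rewrite H. apply Rmult_le_compat_r; lra. }
  split; [exact B1|split; [exact B2|]].
  assert (Hk : 1 - Ai <= A - 1).
  { assert (0 <= Ai * ((A - 1) * (A - 1))) by (apply Rmult_le_pos; nra). nra. }
  destruct (Rle_or_lt 0 (g 0)) as [P|P].
  - specialize (H3 P). rewrite (Rabs_pos_eq (g 0)) in * by lra.
    rewrite (Rabs_pos_eq (g t)) in * by lra.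
    apply Rabs_le; split; nra.
  - assert (P' : g 0 <= 0) by lra. specialize (H4 P').
    rewrite (Rabs_left1 (g 0)) in * by lra.
    rewrite (Rabs_left1 (g t)) in * by lra.
    apply Rabs_le; split; nra.
Qed.

Lemma MVT_bound (f df : R -> R) (a b C : R) :
  (forall x, Rmin a b <= x <= Rmax a b -> is_derive f x (df x)) ->
  (forall x, Rmin a b <= x <= Rmax a b -> Rabs (df x) <= C) ->
  Rabs (f b - f a) <= C * Rabs (b - a).
Proof.
  intros Hd Hb.
  destruct (MVT_gen f a b df) as [c [Hc1 Hc2]].
  - intros x Hx. apply Hd. lra.
  - intros x Hx. apply cont_of_derive with (df x). apply Hd; auto.
  - rewrite Hc2, Rabs_mult. apply Rmult_le_compat_r. apply Rabs_pos. apply Hb; auto.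
Qed.

Lemma taylor2 (f : R -> R) (c r : R) : 0 < r ->
  (forall y, Rabs (y - c) < r -> ex_derive f y) ->
  ex_derive (Derive f) c -> Derive f c = 0 ->
  forall eps, 0 < eps -> exists del, 0 < del /\ forall h, h <> 0 -> Rabs h < del ->
    Rabs ((f (c + h) - f c) / (h * h) - Derive (Derive f) c / 2) <= eps.
Proof.
  intros Hr Hf Hf2 Hf0 eps He.
  set (L := Derive (Derive f) c).
  assert (HL : derivable_pt_lim (Derive f) c L).
  { apply is_derive_Reals. apply Derive_correct. auto. }
  destruct (HL eps He) as [d Hd].
  exists (Rmin d r). split. apply Rmin_pos; auto. apply cond_pos.
  intros h Hh0 Hh.
  assert (Hhd : Rabs h < d) by (apply Rlt_le_trans with (1 := Hh); apply Rmin_l).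
  assert (Hhr : Rabs h < r) by (apply Rlt_le_trans with (1 := Hh); apply Rmin_r).
  assert (Hb : Rabs ((f (c + h) - L * ((c + h) - c) * ((c + h) - c) / 2) - (f c - L * (c - c) * (c - c) / 2))
     <= (eps * Rabs h) * Rabs ((c + h) - c)).
  { apply (MVT_bound (fun y => f y - L * (y - c) * (y - c) / 2) (fun y => Derive f y - L * (y - c))).
    - intros x Hx.
      assert (Hxr : Rabs (x - c) < r).
      { apply Rle_lt_trans with (2 := Hhr). unfold Rmin, Rmax in Hx.
        destruct (Rle_dec c (c+h)); apply Rabs_le; split; apply Rabs_le_between in Hhr ||
          (pose proof (Rabs_pos h)); try (rewrite Rabs_pos_eq in * by lra); try (rewrite Rabs_left in * by lra); lra. }
      apply (is_derive_minus (K:=R_AbsRing) (V:=R_NormedModule) f (fun y => L * (y - c) * (y - c) / 2)).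
      + apply Derive_correct. apply Hf; auto.
      + auto_derive; auto. field.
    - intros x Hx.
      destruct (Req_dec x c) as [->|Hxc].
      + rewrite Hf0. replace (0 - L * (c - c)) with 0 by ring. rewrite Rabs_R0.
        apply Rmult_le_pos; [lra|apply Rabs_pos].
      + assert (Hxc' : Rabs (x - c) <= Rabs h).
        { unfold Rmin, Rmax in Hx. destruct (Rle_dec c (c+h));
          [rewrite (Rabs_pos_eq h) by lra | rewrite (Rabs_left h) by lra];
          apply Rabs_le; split; lra. }
        assert (Hx0 : x - c <> 0) by lra.
        specialize (Hd (x - c) Hx0 ltac:(simpl; lra)).
        replace (c + (x - c)) with x in Hd by ring. rewrite Hf0 in Hd.
        replace (Derive f x - L * (x - c)) with (((Derive f x - 0) / (x - c) - L) * (x - c)) by (field; auto).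
        rewrite Rabs_mult. apply Rmult_le_compat; try apply Rabs_pos; lra. }
  replace ((c + h) - c) with h in Hb by ring. replace (c - c) with 0 in Hb by ring.
  replace ((f (c + h) - f c) / (h * h) - L / 2) with
    (((f (c + h) - L * h * h / 2) - (f c - L * 0 * 0 / 2)) / (h * h)) by (field; auto).
  unfold Rdiv at 1. rewrite Rabs_mult.
  assert (Hhh : 0 < h * h) by (apply Rlt_0_sqr in Hh0; exact Hh0).
  rewrite (Rabs_pos_eq (/ (h * h))) by (left; apply Rinv_0_lt_compat; auto).
  apply Rmult_le_reg_r with (h * h); auto.
  rewrite Rmult_assoc, Rinv_l by lra. rewrite Rmult_1_r.
  replace (eps * (h * h)) with (eps * Rabs h * Rabs h); auto.
  rewrite Rmult_assoc. f_equal. rewrite <- Rabs_mult. apply Rabs_pos_eq. lra.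
Qed.

Lemma diff2d (f : R -> R -> R) (x y : R) :
  locally_2d (fun u v => ex_derive (fun z => f z v) u) x y ->
  continuity_2d_pt (fun u v => Derive (fun z => f z v) u) x y ->
  ex_derive (fun z => f x z) y ->
  differentiable_pt_lim f x y (Derive (fun z => f z y) x) (Derive (fun z => f x z) y).
Proof.
  intros [d0 Hd0] Hc Hy eps.
  set (lx := Derive (fun z => f z y) x). set (ly := Derive (fun z => f x z) y).
  assert (He2 : 0 < eps / 2) by (pose proof (cond_pos eps); lra).
  destruct (Hc (mkposreal _ He2)) as [d1 Hd1].
  assert (Hly : derivable_pt_lim (fun z => f x z) y ly).
  { apply is_derive_Reals. apply Derive_correct. auto. }
  destruct (Hly _ He2) as [d2 Hd2].
  assert (Hd : 0 < Rmin d0 (Rmin d1 d2)).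
  { repeat apply Rmin_pos; apply cond_pos. }
  exists (mkposreal _ Hd). simpl. intros u v Hu Hv.
  assert (Hu0 : Rabs (u - x) < d0) by (apply Rlt_le_trans with (1 := Hu); apply Rmin_l).
  assert (Hv0 : Rabs (v - y) < d0) by (apply Rlt_le_trans with (1 := Hv); apply Rmin_l).
  assert (Hu1 : Rabs (u - x) < d1) by (apply Rlt_le_trans with (1 := Hu);
     eapply Rle_trans; [apply Rmin_r|apply Rmin_l]).
  assert (Hv1 : Rabs (v - y) < d1) by (apply Rlt_le_trans with (1 := Hv);
     eapply Rle_trans; [apply Rmin_r|apply Rmin_l]).
  assert (Hv2 : Rabs (v - y) < d2) by (apply Rlt_le_trans with (1 := Hv);
     eapply Rle_trans; apply Rmin_r).
  assert (A1 : Rabs ((f u v - lx * u) - (f x v - lx * x)) <= eps / 2 * Rabs (u - x)).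
  { apply (MVT_bound (fun z => f z v - lx * z) (fun z => Derive (fun z => f z v) z - lx)).
    - intros z Hz.
      assert (Hzx : Rabs (z - x) <= Rabs (u - x)).
      { unfold Rmin, Rmax in Hz. destruct (Rle_dec x u);
        [rewrite (Rabs_pos_eq (u - x)) by lra | rewrite (Rabs_left (u - x)) by lra];
        apply Rabs_le; split; lra. }
      apply (is_derive_minus (K:=R_AbsRing) (V:=R_NormedModule) (fun z => f z v) (fun z => lx * z)).
      + apply Derive_correct. apply Hd0; lra.
      + auto_derive; auto. ring.
    - intros z Hz.
      assert (Hzx : Rabs (z - x) <= Rabs (u - x)).
      { unfold Rmin, Rmax in Hz. destruct (Rle_dec x u);
        [rewrite (Rabs_pos_eq (u - x)) by lra | rewrite (Rabs_left (u - x)) by lra];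
        apply Rabs_le; split; lra. }
      left. apply (Hd1 z v); lra. }
  assert (A2 : Rabs (f x v - f x y - ly * (v - y)) <= eps / 2 * Rabs (v - y)).
  { destruct (Req_dec v y) as [->|Hvy].
    - replace (f x y - f x y - ly * (y - y)) with 0 by ring. rewrite Rabs_R0.
      apply Rmult_le_pos; [lra|apply Rabs_pos].
    - assert (Hk : v - y <> 0) by lra.
      specialize (Hd2 (v - y) Hk Hv2). replace (y + (v - y)) with v in Hd2 by ring.
      replace (f x v - f x y - ly * (v - y)) with (((f x v - f x y) / (v - y) - ly) * (v - y)) by (field; auto).
      rewrite Rabs_mult. apply Rmult_le_compat_r. apply Rabs_pos. lra. }
  replace (f u v - f x y - (lx * (u - x) + ly * (v - y)))
    with (((f u v - lx * u) - (f x v - lx * x)) + (f x v - f x y - ly * (v - y))) by ring.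
  eapply Rle_trans. apply Rabs_triang.
  assert (Rabs (u - x) <= Rmax (Rabs (u - x)) (Rabs (v - y))) by apply Rmax_l.
  assert (Rabs (v - y) <= Rmax (Rabs (u - x)) (Rabs (v - y))) by apply Rmax_r.
  pose proof (cond_pos eps). nra.
Qed.

Lemma RInt_approx (f : R -> R) (u v c eps : R) :
  (forall y, Rmin u v <= y <= Rmax u v -> continuous f y) ->
  (forall y, Rmin u v <= y <= Rmax u v -> Rabs (f y - c) <= eps) ->
  Rabs (RInt f u v - (v - u) * c) <= eps * Rabs (v - u).
Proof.
  intros Hc Hb.
  assert (Hi : ex_RInt f u v) by (apply (ex_RInt_continuous (V:=R_CompleteNormedModule)); auto).
  assert (Hk : ex_RInt (fun _ => c) u v) by apply ex_RInt_const.
  assert (E : RInt f u v - (v - u) * c = RInt (fun y => f y - c) u v).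
  { pose proof (RInt_minus (V:=R_CompleteNormedModule) f (fun _ => c) u v Hi Hk) as H.
    rewrite RInt_const in H. unfold minus, plus, opp, scal in H; simpl in H.
    unfold mult in H; simpl in H. transitivity (RInt f u v + - ((v + - u) * c)); [ring|].
    exact (eq_sym H). }
  rewrite E.
  assert (Hi2 : ex_RInt (fun y => f y - c) u v) by (apply (ex_RInt_minus f (fun _ => c)); auto).
  destruct (Rle_or_lt u v) as [Huv|Huv].
  - rewrite (Rabs_pos_eq (v - u)) by lra. rewrite Rmult_comm.
    apply abs_RInt_le_const; auto. intros t Ht. apply Hb. rewrite Rmin_left, Rmax_right; lra.
  - rewrite <- (opp_RInt_swap (fun y => f y - c) v u) by (apply ex_RInt_swap; auto).
    change (opp (RInt (fun y : R => f y - c) v u)) with (- (RInt (fun y : R => f y - c) v u)).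
    rewrite Rabs_Ropp. rewrite (Rabs_left (v - u)) by lra.
    replace (eps * - (v - u)) with ((u - v) * eps) by ring.
    apply abs_RInt_le_const; auto. lra. apply ex_RInt_swap; auto.
    intros t Ht. apply Hb. rewrite Rmin_right, Rmax_left; lra.
Qed.

Lemma RInt_bound (f : R -> R) (u v eps : R) :
  (forall y, Rmin u v <= y <= Rmax u v -> continuous f y) ->
  (forall y, Rmin u v <= y <= Rmax u v -> Rabs (f y) <= eps) ->
  Rabs (RInt f u v) <= eps * Rabs (v - u).
Proof.
  intros Hc Hb. pose proof (RInt_approx f u v 0 eps Hc).
  rewrite Rmult_0_r, Rminus_0_r in H. apply H. intros y Hy. rewrite Rminus_0_r. auto.
Qed.

Lemma cpt_intro (f : R -> R) x :
  (forall eps, 0 < eps -> exists d, 0 < d /\ forall y, Rabs (y - x) < d -> Rabs (f y - f x) < eps) ->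
  continuity_pt f x.
Proof.
  intros H eps He. destruct (H eps He) as [d [Hd Hd']]. exists d. split; auto.
  intros y [_ Hy]. apply Hd'. exact Hy.
Qed.

Lemma cpt_elim (f : R -> R) x : continuity_pt f x ->
  forall eps, 0 < eps -> exists d, 0 < d /\ forall y, Rabs (y - x) < d -> Rabs (f y - f x) < eps.
Proof.
  intros H eps He. destruct (H eps He) as [d [Hd Hd']]. exists d. split; auto.
  intros y Hy. destruct (Req_dec y x) as [->|Hne].
  - unfold Rminus. rewrite Rplus_opp_r, Rabs_R0. auto.
  - apply Hd'. split; [split; [exact I|auto]|exact Hy].
Qed.

Lemma cpt_comp2 (f g : R -> R) (h : R -> R -> R) x :
  continuity_pt f x -> continuity_pt g x -> continuity_2d_pt h (f x) (g x) ->
  continuity_pt (fun t => h (f t) (g t)) x.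
Proof.
  intros Hf Hg Hh. apply cpt_intro. intros eps He.
  destruct (Hh (mkposreal eps He)) as [d Hd].
  destruct (cpt_elim f x Hf d (cond_pos d)) as [d1 [Hd1 Hd1']].
  destruct (cpt_elim g x Hg d (cond_pos d)) as [d2 [Hd2 Hd2']].
  exists (Rmin d1 d2). split. apply Rmin_pos; auto.
  intros y Hy. apply Hd.
  apply Hd1'. apply Rlt_le_trans with (1 := Hy); apply Rmin_l.
  apply Hd2'. apply Rlt_le_trans with (1 := Hy); apply Rmin_r.
Qed.

Lemma RInt_deriv (h : R -> R) (t0 t : R) : (forall z, continuity_pt h z) ->
  is_derive (fun t => RInt h t0 t) t (h t).
Proof.
  intros Hc.
  apply (is_derive_RInt (V:=R_CompleteNormedModule) h (fun t => RInt h t0 t) t0 t).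
  - exists (mkposreal 1 Rlt_0_1). intros b _. apply (RInt_correct (V:=R_CompleteNormedModule)).
    apply (ex_RInt_continuous (V:=R_CompleteNormedModule)). intros z _.
    apply continuity_pt_filterlim. auto.
  - apply continuity_pt_filterlim. auto.
Qed.

Lemma RInt_ex (h : R -> R) u v : (forall z, continuity_pt h z) -> ex_RInt h u v.
Proof.
  intros Hc. apply (ex_RInt_continuous (V:=R_CompleteNormedModule)). intros z _.
  apply continuity_pt_filterlim. auto.
Qed.

Lemma half_pow_small (C eps : R) : 0 < eps -> exists N, forall n, (n >= N)%nat -> C * (/2) ^ n < eps.
Proof.
  intros He.
  assert (Hh : Rabs (/2) < 1) by (rewrite Rabs_pos_eq; lra).
  destruct (pow_lt_1_zero (/2) Hh (eps / (Rabs C + 1))) as [N HN].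
  { apply Rdiv_lt_0_compat; auto. pose proof (Rabs_pos C); lra. }
  exists N. intros n Hn. specialize (HN n Hn).
  rewrite Rabs_pos_eq in HN by (apply pow_le; lra).
  pose proof (Rabs_pos C). pose proof (Rle_abs C).
  assert (0 <= (/2) ^ n) by (apply pow_le; lra).
  apply Rmult_lt_compat_l with (r := Rabs C + 1) in HN; [|lra].
  replace ((Rabs C + 1) * (eps / (Rabs C + 1))) with eps in HN by (field; lra).
  nra.
Qed.

Lemma le_half_pow (z w C : R) : (forall n, z <= w + C * (/2) ^ n) -> z <= w.
Proof.
  intros H. apply Rnot_lt_le. intros Hlt.
  destruct (half_pow_small C (z - w)) as [N HN]; [lra|].
  specialize (HN N (le_n N)). specialize (H N). lra.
Qed.

Section P1.
Variables (T : R) (a : R -> R -> R).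
Hypothesis HT : 0 < T.
Hypothesis HC : C2_on_rect T a.
Hypothesis HS : solves_eq T a.

Lemma C1a t x : in_rect T t x -> ex_derive (fun y => a t y) x /\ ex_derive (fun s => a s x) t /\
  cont2 a t x /\ cont2 (dX a) t x /\ cont2 (dT a) t x.
Proof. destruct HC as [H _]. apply H. Qed.

Lemma a_c2d t x : in_rect T t x -> continuity_2d_pt a t x.
Proof. intros H. apply continuity_2d_pt_filterlim. apply (C1a t x H). Qed.

Lemma a_cont_x t x : in_rect T t x -> continuous (fun y => a t y) x.
Proof. intros H. apply (ex_derive_continuous (K:=R_AbsRing) (V:=R_NormedModule)). apply (C1a t x H). Qed.

Lemma uc : forall eps, 0 < eps -> exists d, 0 < d /\ forall t x s y, in_rect T t x -> in_rect T s y ->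
  Rabs (s - t) < d -> Rabs (y - x) < d -> Rabs (a s y - a t x) < eps.
Proof.
  intros eps He.
  destruct (uniform_continuity_2d a 0 T (-PI) PI) with (eps := mkposreal eps He) as [d Hd].
  { intros x y Hx Hy. apply a_c2d. split; auto. }
  exists d. split. apply cond_pos. intros t x s y [H1 H2] [H3 H4] H5 H6. apply Hd; auto.
Qed.

Lemma rect_pi : 0 < PI.
Proof. apply PI_RGT_0. Qed.

Lemma bound : exists M, 0 <= M /\ forall t x, in_rect T t x -> Rabs (a t x) <= M.
Proof.
  destruct (uc 1 Rlt_0_1) as [d [Hd Huc]].
  pose proof rect_pi as Hpi.
  assert (Hq : 0 <= (T + 2 * PI) / d) by (apply Rle_mult_inv_pos; lra).
  destruct (nfloor_ex _ Hq) as [n Hn].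
  set (N := S n).
  assert (HN : (T + 2 * PI) / d < INR N) by (unfold N; rewrite S_INR; lra).
  assert (HN0 : 0 < INR N) by (unfold N; rewrite S_INR; pose proof (pos_INR n); lra).
  assert (HN1 : T + 2 * PI < d * INR N).
  { apply Rmult_lt_compat_l with (r := d) in HN; auto.
    replace (d * ((T + 2 * PI) / d)) with (T + 2 * PI) in HN by (field; lra). lra. }
  exists (Rabs (a 0 (-PI)) + INR N). split.
  { pose proof (Rabs_pos (a 0 (-PI))). lra. }
  intros t x [Ht Hx].
  set (p1 := fun k : nat => INR k * t / INR N).
  set (p2 := fun k : nat => -PI + INR k * (x + PI) / INR N).
  assert (Hin : forall k, (k <= N)%nat -> in_rect T (p1 k) (p2 k)).
  { intros k Hk. apply le_INR in Hk. pose proof (pos_INR k).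
    unfold p1, p2. split; split.
    - apply Rmult_le_pos; [apply Rmult_le_pos; lra | left; apply Rinv_0_lt_compat; lra].
    - apply Rmult_le_reg_r with (INR N); auto. unfold Rdiv. rewrite Rmult_assoc, Rinv_l by lra. nra.
    - assert (0 <= INR k * (x + PI) / INR N).
      { apply Rmult_le_pos; [apply Rmult_le_pos; lra | left; apply Rinv_0_lt_compat; lra]. }
      lra.
    - assert (INR k * (x + PI) / INR N <= x + PI).
      { apply Rmult_le_reg_r with (INR N); auto. unfold Rdiv. rewrite Rmult_assoc, Rinv_l by lra. nra. }
      lra. }
  assert (Hk : forall k, (k <= N)%nat -> Rabs (a (p1 k) (p2 k) - a 0 (-PI)) <= INR k).
  { induction k as [|k IH]; intros Hk.
    - unfold p1, p2. change (INR 0) with 0. replace (0 * t / INR N) with 0 by (field; lra).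
      replace (-PI + 0 * (x + PI) / INR N) with (-PI) by (field; lra).
      unfold Rminus. rewrite Rplus_opp_r, Rabs_R0. lra.
    - assert (Hk' : (k <= N)%nat) by lia. specialize (IH Hk').
      assert (Hs : Rabs (a (p1 (S k)) (p2 (S k)) - a (p1 k) (p2 k)) < 1).
      { apply Huc; auto.
        - unfold p1. rewrite S_INR. replace ((INR k + 1) * t / INR N - INR k * t / INR N) with (t / INR N) by (field; lra).
          rewrite Rabs_pos_eq by (apply Rmult_le_pos; [lra|left; apply Rinv_0_lt_compat; lra]).
          apply Rmult_lt_reg_r with (INR N); auto. unfold Rdiv. rewrite Rmult_assoc, Rinv_l by lra. nra.
        - unfold p2. rewrite S_INR.
          replace (-PI + (INR k + 1) * (x + PI) / INR N - (-PI + INR k * (x + PI) / INR N)) with ((x + PI) / INR N) by (field; lra).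
          rewrite Rabs_pos_eq by (apply Rmult_le_pos; [lra|left; apply Rinv_0_lt_compat; lra]).
          apply Rmult_lt_reg_r with (INR N); auto. unfold Rdiv. rewrite Rmult_assoc, Rinv_l by lra. nra. }
      rewrite S_INR.
      replace (a (p1 (S k)) (p2 (S k)) - a 0 (-PI)) with
        ((a (p1 (S k)) (p2 (S k)) - a (p1 k) (p2 k)) + (a (p1 k) (p2 k) - a 0 (-PI))) by ring.
      eapply Rle_trans. apply Rabs_triang. lra. }
  specialize (Hk N (le_n N)).
  unfold p1, p2 in Hk. replace (INR N * t / INR N) with t in Hk by (field; lra).
  replace (-PI + INR N * (x + PI) / INR N) with x in Hk by (field; lra).
  pose proof (Rabs_triang_inv (a t x) (a 0 (-PI))). lra.
Qed.

Variable M : R.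
Hypothesis HM0 : 0 <= M.
Hypothesis HM : forall t x, in_rect T t x -> Rabs (a t x) <= M.

Definition F (t x : R) := RInt (fun y => a t y) (-PI) x.
Definition Ii (t : R) := / PI * RInt (fun y => (a t y) ^ 2) (- PI) PI.

Lemma ex_RInt_a t u v : 0 <= t <= T -> -PI <= u <= PI -> -PI <= v <= PI ->
  ex_RInt (fun y => a t y) u v.
Proof.
  intros Ht Hu Hv. apply (ex_RInt_continuous (V:=R_CompleteNormedModule)).
  intros z Hz. apply a_cont_x. split; auto.
  split. eapply Rle_trans; [|apply Hz]. apply Rmin_glb; lra.
  eapply Rle_trans; [apply Hz|]. apply Rmax_lub; lra.
Qed.

Lemma F_diff t u v : 0 <= t <= T -> -PI <= u <= PI -> -PI <= v <= PI ->
  F t v - F t u = RInt (fun y => a t y) u v.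
Proof.
  intros Ht Hu Hv. unfold F.
  pose proof rect_pi.
  rewrite <- (RInt_Chasles (V:=R_CompleteNormedModule) (fun y => a t y) (-PI) u v).
  - change (plus ?x ?y) with (x + y). ring.
  - apply ex_RInt_a; auto; lra.
  - apply ex_RInt_a; auto.
Qed.

Lemma F_lip t u v : 0 <= t <= T -> -PI <= u <= PI -> -PI <= v <= PI ->
  Rabs (F t v - F t u) <= M * Rabs (v - u).
Proof.
  intros Ht Hu Hv. rewrite F_diff by auto.
  apply RInt_bound.
  - intros y Hy. apply a_cont_x. split; auto.
    split. eapply Rle_trans; [|apply Hy]. apply Rmin_glb; lra.
    eapply Rle_trans; [apply Hy|]. apply Rmax_lub; lra.
  - intros y Hy. apply HM. split; auto.
    split. eapply Rle_trans; [|apply Hy]. apply Rmin_glb; lra.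
    eapply Rle_trans; [apply Hy|]. apply Rmax_lub; lra.
Qed.

Lemma char_cw X y : characteristic T a y X -> forall t, 0 <= t <= T -> cw T X t.
Proof. intros [_ [H _]] t Ht. apply cw_of_filterlim. auto. Qed.

Lemma char_const_m : characteristic T a (-PI) (fun _ => -PI).
Proof.
  pose proof rect_pi.
  split; [reflexivity|split; [|split]].
  - intros t Ht. apply filterlim_const.
  - intros; lra.
  - intros t Ht. rewrite RInt_point. apply (is_derive_const (K:=R_AbsRing) (V:=R_NormedModule)).
Qed.

Lemma char_const_p : characteristic T a PI (fun _ => PI).
Proof.
  pose proof rect_pi.
  split; [reflexivity|split; [|split]].
  - intros t Ht. apply filterlim_const.
  - intros; lra.
  - intros t Ht. destruct HS as [_ H0]. rewrite H0 by lra.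
    apply (is_derive_const (K:=R_AbsRing) (V:=R_NormedModule)).
Qed.

Lemma char_diff X1 X2 y1 y2 : characteristic T a y1 X1 -> characteristic T a y2 X2 ->
  forall t, 0 <= t <= T ->
    Rabs (X1 t - X2 t) <= Rabs (y1 - y2) * exp (M * t) /\
    Rabs (y1 - y2) * exp (- (M * t)) <= Rabs (X1 t - X2 t).
Proof.
  intros C1 C2 t Ht.
  set (g := fun s => X1 s - X2 s).
  set (c := fun s => if Req_EM_T (X1 s) (X2 s) then 0 else (F s (X1 s) - F s (X2 s)) / (X1 s - X2 s)).
  destruct C1 as [E1 [K1 [R1 D1]]]. destruct C2 as [E2 [K2 [R2 D2]]].
  assert (G0 : g 0 = y1 - y2) by (unfold g; rewrite E1, E2; auto).
  destruct (GL_abs T g c M HT HM0) with (t := t) as [A [B _]]; auto.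
  - intros u Hu. apply cw_minus; apply cw_of_filterlim; auto.
  - intros s Hs. unfold g.
    assert (H := is_derive_minus (K:=R_AbsRing) (V:=R_NormedModule) X1 X2 s _ _ (D1 s Hs) (D2 s Hs)).
    eapply D_ext; [| |exact H]. intros; reflexivity.
    change (minus ?x ?y) with (x - y). unfold c.
    destruct (Req_EM_T (X1 s) (X2 s)) as [Eq|Ne].
    + rewrite Eq. ring.
    + fold (F s (X1 s)) (F s (X2 s)). field. lra.
  - intros s Hs. unfold c. destruct (Req_EM_T (X1 s) (X2 s)) as [Eq|Ne].
    + rewrite Rabs_R0; auto.
    + unfold Rdiv. rewrite Rabs_mult, Rabs_inv.
      apply Rmult_le_reg_r with (Rabs (X1 s - X2 s)). apply Rabs_pos_lt. lra.
      rewrite Rmult_assoc, Rinv_l by (apply Rabs_no_R0; lra). rewrite Rmult_1_r.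
      apply F_lip; try lra; [apply R2|apply R1]; lra.
  - rewrite G0 in A, B. split; auto.
Qed.

Lemma char_range X y : characteristic T a y X -> forall t, 0 <= t <= T -> -PI <= X t <= PI.
Proof. intros [_ [_ [H _]]]; auto. Qed.

Lemma char_interior X y : characteristic T a y X -> -PI < y < PI ->
  forall t, 0 <= t <= T -> -PI < X t < PI.
Proof.
  intros C Hy t Ht.
  pose proof (char_range X y C t Ht).
  destruct (char_diff X _ y _ C char_const_m t Ht) as [_ A].
  destruct (char_diff X _ y _ C char_const_p t Ht) as [_ B].
  assert (P1 : 0 < Rabs (y - - PI) * exp (- (M * t))).
  { apply Rmult_lt_0_compat. apply Rabs_pos_lt. lra. apply exp_pos. }
  assert (P2 : 0 < Rabs (y - PI) * exp (- (M * t))).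
  { apply Rmult_lt_0_compat. apply Rabs_pos_lt. lra. apply exp_pos. }
  split.
  - destruct (Req_dec (X t) (-PI)) as [Eq|Ne]; [|lra].
    rewrite Eq in A. replace (- PI - - PI) with 0 in A by ring. rewrite Rabs_R0 in A. lra.
  - destruct (Req_dec (X t) PI) as [Eq|Ne]; [|lra].
    rewrite Eq in B. replace (PI - PI) with 0 in B by ring. rewrite Rabs_R0 in B. lra.
Qed.

Lemma char_bnd_m X : characteristic T a (-PI) X -> forall t, 0 <= t <= T -> X t = -PI.
Proof.
  intros C t Ht. destruct (char_diff X _ _ _ C char_const_m t Ht) as [A _].
  unfold Rminus at 2 in A. rewrite Rplus_opp_r, Rabs_R0, Rmult_0_l in A.
  pose proof (Rabs_pos (X t - - PI)).
  assert (Rabs (X t - - PI) = 0) by lra. apply Rabs_eq_0 in H0. lra.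
Qed.

Lemma char_bnd_p X : characteristic T a PI X -> forall t, 0 <= t <= T -> X t = PI.
Proof.
  intros C t Ht. destruct (char_diff X _ _ _ C char_const_p t Ht) as [A _].
  unfold Rminus at 2 in A. rewrite Rplus_opp_r, Rabs_R0, Rmult_0_l in A.
  pose proof (Rabs_pos (X t - PI)).
  assert (Rabs (X t - PI) = 0) by lra. apply Rabs_eq_0 in H0. lra.
Qed.

Lemma w_deriv X y s : characteristic T a y X -> -PI < y < PI -> 0 < s < T ->
  is_derive (fun s => a s (X s)) s (a s (X s) * a s (X s) - Ii s).
Proof.
  intros C Hy Hs.
  assert (Hx := char_interior X y C Hy s ltac:(lra)).
  set (x := X s) in *.
  destruct C as [_ [_ [_ D]]].
  assert (Hr : in_rect T s x) by (split; lra).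
  destruct (C1a s x Hr) as [Ex [Et [_ [_ Ct]]]].
  assert (Hdiff : differentiable_pt_lim a s x (Derive (fun z => a z x) s) (Derive (fun z => a s z) x)).
  { apply diff2d; auto.
    - set (del := Rmin (Rmin s (T - s)) (Rmin (x + PI) (PI - x))).
      assert (Hdel : 0 < del) by (unfold del; repeat apply Rmin_pos; lra).
      exists (mkposreal del Hdel). simpl. intros u v Hu Hv.
      assert (del <= s /\ del <= T - s /\ del <= x + PI /\ del <= PI - x).
      { unfold del. repeat split.
        - eapply Rle_trans; apply Rmin_l.
        - eapply Rle_trans; [apply Rmin_l|apply Rmin_r].
        - eapply Rle_trans; [apply Rmin_r|apply Rmin_l].
        - eapply Rle_trans; apply Rmin_r. }
      apply Rabs_def2 in Hu. apply Rabs_def2 in Hv.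
      apply (C1a u v). split; lra.
    - apply continuity_2d_pt_filterlim. exact Ct. }
  assert (H := derivable_pt_lim_comp_2d a (fun t => t) X s _ _ 1 _ Hdiff (derivable_pt_lim_id s)
     (proj1 (is_derive_Reals _ _ _) (D s Hs))).
  apply is_derive_Reals.
  replace (a s x * a s x - Ii s) with
    (Derive (fun z => a z x) s * 1 + Derive (fun z => a s z) x * RInt (fun y0 => a s y0) (-PI) x).
  exact H.
  destruct HS as [P _]. specialize (P s x Hr). unfold Ii, dT, dX in *. fold x.
  replace (a s x ^ 2) with (a s x * a s x) in P by ring. lra.
Qed.

Lemma w_cw X y t : characteristic T a y X -> 0 <= t <= T -> cw T (fun s => a s (X s)) t.
Proof.
  intros C Ht. apply (cw_comp2 T (fun s => s) X a t).
  - apply cw_cont. apply continuity_pt_id.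
  - apply (char_cw X y C t Ht).
  - apply a_c2d. split; auto. apply (char_range X y C t Ht).
Qed.

Lemma w_compare X Y yX yY : characteristic T a yX X -> characteristic T a yY Y ->
  -PI < yX < PI -> -PI < yY < PI -> a 0 yX <= a 0 yY ->
  forall t, 0 <= t <= T -> a t (X t) <= a t (Y t).
Proof.
  intros CX CY HX HY Ha t Ht.
  set (g := fun s => a s (X s) - a s (Y s)).
  set (c := fun s => a s (X s) + a s (Y s)).
  destruct (GL T g c (2 * M) HT) with (t := t) as [_ [_ [_ G4]]]; auto.
  - intros u Hu. apply cw_minus; [apply (w_cw X yX)|apply (w_cw Y yY)]; auto.
  - intros s Hs. unfold g.
    assert (H := is_derive_minus (K:=R_AbsRing) (V:=R_NormedModule) _ _ s _ _
      (w_deriv X yX s CX HX Hs) (w_deriv Y yY s CY HY Hs)).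
    eapply D_ext; [| |exact H]. intros; reflexivity.
    change (minus ?x ?y) with (x - y). unfold c. ring.
  - intros s Hs. unfold c. eapply Rle_trans. apply Rabs_triang.
    assert (Rabs (a s (X s)) <= M) by (apply HM; split; [lra|apply (char_range X yX CX); lra]).
    assert (Rabs (a s (Y s)) <= M) by (apply HM; split; [lra|apply (char_range Y yY CY); lra]).
    lra.
  - unfold g in G4. destruct CX as [EX _]. destruct CY as [EY _]. rewrite EX, EY in G4.
    unfold g. lra.
Qed.

End P1.

Definition clamp (lo hi x : R) := Rmax lo (Rmin hi x).

Lemma clamp_in lo hi x : lo <= hi -> lo <= clamp lo hi x <= hi.
Proof. intros H. unfold clamp, Rmax, Rmin. repeat destruct Rle_dec; lra. Qed.

Lemma clamp_id lo hi x : lo <= x <= hi -> clamp lo hi x = x.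
Proof. intros H. unfold clamp, Rmax, Rmin. repeat destruct Rle_dec; lra. Qed.

Lemma clamp_lip lo hi x y : lo <= hi -> Rabs (clamp lo hi x - clamp lo hi y) <= Rabs (x - y).
Proof.
  intros H. destruct (Rle_or_lt x y) as [Hxy|Hxy];
  [rewrite (Rabs_left1 (x - y)) by lra | rewrite (Rabs_pos_eq (x - y)) by lra];
  apply Rabs_le; unfold clamp, Rmax, Rmin; repeat destruct Rle_dec; lra.
Qed.

Section P2.
Variables (T : R) (a : R -> R -> R).
Hypothesis HT : 0 < T.
Hypothesis HC : C2_on_rect T a.
Hypothesis HS : solves_eq T a.
Variable M : R.
Hypothesis HM0 : 0 <= M.
Hypothesis HM : forall t x, in_rect T t x -> Rabs (a t x) <= M.

Definition Gf (s x : R) := F a (clamp 0 T s) (clamp (-PI) PI x).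

Lemma pi_pos : 0 < PI. Proof. apply PI_RGT_0. Qed.

Lemma ct_in s : 0 <= clamp 0 T s <= T.
Proof. apply clamp_in. lra. Qed.
Lemma cx_in x : -PI <= clamp (-PI) PI x <= PI.
Proof. apply clamp_in. pose proof pi_pos. lra. Qed.

Lemma G_lip s x y : Rabs (Gf s x - Gf s y) <= M * Rabs (x - y).
Proof.
  unfold Gf. eapply Rle_trans. apply (F_lip T a HC M HM); [apply ct_in|apply cx_in|apply cx_in].
  apply Rmult_le_compat_l; auto. apply clamp_lip. pose proof pi_pos; lra.
Qed.

Lemma F_m t : F a t (-PI) = 0.
Proof. unfold F. rewrite RInt_point. reflexivity. Qed.

Lemma F_p t : 0 <= t <= T -> F a t PI = 0.
Proof. intros Ht. unfold F. destruct HS as [_ H]. apply H; auto. Qed.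

Lemma G_m s : Gf s (-PI) = 0.
Proof. unfold Gf. rewrite (clamp_id (-PI) PI (-PI)) by (pose proof pi_pos; lra). apply F_m. Qed.

Lemma G_p s : Gf s PI = 0.
Proof. unfold Gf. rewrite (clamp_id (-PI) PI PI) by (pose proof pi_pos; lra). apply F_p. apply ct_in. Qed.

Lemma G_bnd s x : Rabs (Gf s x) <= 2 * PI * M.
Proof.
  pose proof (G_lip s x (-PI)) as H. rewrite G_m, Rminus_0_r in H.
  unfold Gf in *.
  pose proof pi_pos.
  replace (F a (clamp 0 T s) (clamp (- PI) PI x)) with
     (F a (clamp 0 T s) (clamp (- PI) PI x) - F a (clamp 0 T s) (- PI)) by (rewrite F_m; ring).
  eapply Rle_trans. apply (F_lip T a HC M HM); [apply ct_in|lra|apply cx_in].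
  pose proof (cx_in x). replace (2 * PI * M) with (M * (2 * PI)) by ring.
  apply Rmult_le_compat_l; auto. apply Rabs_le; lra.
Qed.

Lemma F_tdiff t t' z : 0 <= t <= T -> 0 <= t' <= T -> -PI <= z <= PI ->
  F a t z - F a t' z = RInt (fun y => a t y - a t' y) (-PI) z.
Proof.
  intros Ht Ht' Hz. pose proof pi_pos. unfold F.
  pose proof (RInt_minus (V:=R_CompleteNormedModule) (fun y => a t y) (fun y => a t' y) (-PI) z
     (ex_RInt_a T a HC t (-PI) z Ht ltac:(lra) Hz) (ex_RInt_a T a HC t' (-PI) z Ht' ltac:(lra) Hz)) as E.
  exact (eq_sym E).
Qed.

Lemma G_cont s x : continuity_2d_pt Gf s x.
Proof.
  intros [e He]. simpl. pose proof pi_pos.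
  destruct (uc T a HC (e / (4 * PI))) as [d1 [Hd1 Huc]].
  { apply Rdiv_lt_0_compat; lra. }
  set (d2 := e / (2 * (M + 1))).
  assert (Hd2 : 0 < d2) by (unfold d2; apply Rdiv_lt_0_compat; lra).
  exists (mkposreal (Rmin d1 d2) (Rmin_pos _ _ Hd1 Hd2)). simpl. intros u v Hu Hv.
  assert (Hu1 : Rabs (u - s) < d1) by (eapply Rlt_le_trans; [exact Hu|apply Rmin_l]).
  assert (Hv2 : Rabs (v - x) < d2) by (eapply Rlt_le_trans; [exact Hv|apply Rmin_r]).
  unfold Gf.
  set (cu := clamp 0 T u). set (cs := clamp 0 T s).
  set (cv := clamp (-PI) PI v). set (cx := clamp (-PI) PI x).
  assert (Hcu : 0 <= cu <= T) by apply ct_in. assert (Hcs : 0 <= cs <= T) by apply ct_in.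
  assert (Hcv : -PI <= cv <= PI) by apply cx_in. assert (Hcx : -PI <= cx <= PI) by apply cx_in.
  assert (A : Rabs (F a cu cv - F a cu cx) < e / 2).
  { eapply Rle_lt_trans. apply (F_lip T a HC M HM); auto.
    assert (Rabs (cv - cx) <= Rabs (v - x)) by (apply clamp_lip; lra).
    assert (M * Rabs (cv - cx) <= M * d2) by (apply Rmult_le_compat_l; lra).
    unfold d2 in *. assert (M * (e / (2 * (M + 1))) < e / 2).
    { replace (M * (e / (2 * (M + 1)))) with ((e / 2) * (M / (M + 1))) by (field; lra).
      assert (M / (M + 1) < 1). { apply Rmult_lt_reg_r with (M + 1); [lra|]. unfold Rdiv.
        rewrite Rmult_assoc, Rinv_l by lra. lra. }
      nra. }
    lra. }
  assert (B : Rabs (F a cu cx - F a cs cx) <= e / 2).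
  { rewrite F_tdiff by auto.
    eapply Rle_trans. apply (RInt_bound _ _ _ (e / (4 * PI))).
    - intros y Hy. assert (Hy' : -PI <= y <= PI).
      { split. eapply Rle_trans; [|apply Hy]. apply Rmin_glb; lra.
        eapply Rle_trans; [apply Hy|]. apply Rmax_lub; lra. }
      apply (continuous_minus (K:=R_AbsRing) (V:=R_NormedModule) (fun y => a cu y) (fun y => a cs y));
      apply (a_cont_x T a HC); split; auto.
    - intros y Hy. assert (Hy' : -PI <= y <= PI).
      { split. eapply Rle_trans; [|apply Hy]. apply Rmin_glb; lra.
        eapply Rle_trans; [apply Hy|]. apply Rmax_lub; lra. }
      left. apply Huc; try (split; auto).
      eapply Rle_lt_trans; [apply clamp_lip; lra|exact Hu1].
      unfold Rminus; rewrite Rplus_opp_r, Rabs_R0; auto.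
    - rewrite (Rabs_pos_eq (cx - - PI)) by lra.
      replace (e / 2) with (e / (4 * PI) * (2 * PI)) by (field; lra).
      apply Rmult_le_compat_l. left; apply Rdiv_lt_0_compat; lra. lra. }
  replace (F a cu cv - F a cs cx) with ((F a cu cv - F a cu cx) + (F a cu cx - F a cs cx)) by ring.
  eapply Rle_lt_trans. apply Rabs_triang. lra.
Qed.

Fixpoint Pc (y : R) (n : nat) : R -> R :=
  match n with
  | O => fun _ => y
  | S n => fun t => y + RInt (fun s => Gf s (Pc y n s)) 0 t
  end.

Lemma D_plus_const (f : R -> R) (c x l : R) : is_derive f x l -> is_derive (fun t => c + f t) x l.
Proof.
  intros H. apply is_derive_Reals. apply is_derive_Reals in H.
  replace l with (0 + l) by ring.
  apply (derivable_pt_lim_plus (fun _ => c) f x 0 l); auto. apply derivable_pt_lim_const.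
Qed.

Lemma Pc_cont y n : forall t, continuity_pt (Pc y n) t.
Proof.
  induction n as [|n IH]; intros t.
  - simpl. apply continuity_pt_const. intros u v; reflexivity.
  - apply cont_of_derive with (Gf t (Pc y n t)). simpl.
    apply D_plus_const. apply (RInt_deriv (fun s => Gf s (Pc y n s))). intros z.
    apply (cpt_comp2 (fun s => s) (Pc y n) Gf). apply continuity_pt_id. auto. apply G_cont.
Qed.

Lemma hn_cont y n : forall z, continuity_pt (fun s => Gf s (Pc y n s)) z.
Proof.
  intros z. apply (cpt_comp2 (fun s => s) (Pc y n) Gf). apply continuity_pt_id. apply Pc_cont. apply G_cont.
Qed.

Lemma cpt_abs (f : R -> R) x : continuity_pt f x -> continuity_pt (fun t => Rabs (f t)) x.
Proof. intros H. apply (continuity_pt_comp f Rabs); auto. apply Rcontinuity_abs. Qed.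

Definition Bc := 2 * PI * M.
Definition Lc := M + 1.
Definition K2 := Bc * T * exp (2 * Lc * T).

Lemma Bc_pos : 0 <= Bc.
Proof. unfold Bc. pose proof pi_pos. apply Rmult_le_pos; lra. Qed.

Lemma K2_pos : 0 <= K2.
Proof. unfold K2. apply Rmult_le_pos. apply Rmult_le_pos. apply Bc_pos. lra. left; apply exp_pos. Qed.

Lemma RInt_minus_R (f g : R -> R) u v : ex_RInt f u v -> ex_RInt g u v ->
  RInt f u v - RInt g u v = RInt (fun s => f s - g s) u v.
Proof.
  intros Hf Hg. exact (eq_sym (RInt_minus (V:=R_CompleteNormedModule) f g u v Hf Hg)).
Qed.

Lemma L_a (y z : R) : y + z - y = z. Proof. ring. Qed.
Lemma L_b (y u v : R) : y + u - (y + v) = u - v. Proof. ring. Qed.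

Lemma Pc_step y n t : 0 <= t <= T ->
  Rabs (Pc y (S n) t - Pc y n t) <= Bc * T * (/2) ^ n * exp (2 * Lc * t).
Proof.
  revert t. induction n as [|n IH]; intros t Ht.
  - change (Pc y 1 t) with (y + RInt (fun s => Gf s y) 0 t). change (Pc y 0 t) with y.
    rewrite L_a.
    eapply Rle_trans. apply RInt_bound with (eps := Bc).
    + intros z _. apply continuity_pt_filterlim. apply (hn_cont y 0).
    + intros z _. apply G_bnd.
    + replace (t - 0) with t by ring. rewrite (Rabs_pos_eq t) by lra.
      pose proof Bc_pos. assert (1 <= exp (2 * Lc * t)).
      { rewrite <- exp_0. apply exp_le. unfold Lc. nra. }
      assert (Bc * t <= Bc * T) by (apply Rmult_le_compat_l; lra).
      assert (0 <= Bc * T) by nra. nra.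
  - change (Pc y (S (S n)) t) with (y + RInt (fun s => Gf s (Pc y (S n) s)) 0 t).
    change (Pc y (S n) t) with (y + RInt (fun s => Gf s (Pc y n s)) 0 t).
    rewrite L_b.
    rewrite RInt_minus_R by (apply RInt_ex; apply hn_cont).
    set (C := Bc * T * (/2) ^ n).
    assert (HC0 : 0 <= C) by (unfold C; apply Rmult_le_pos; [apply Rmult_le_pos; [apply Bc_pos|lra] | apply pow_le; lra]).
    assert (HL : 0 < Lc) by (unfold Lc; lra).
    eapply Rle_trans. apply abs_RInt_le. lra.
    apply RInt_ex. intros z. apply continuity_pt_minus; apply hn_cont.
    eapply Rle_trans. apply (RInt_le _ (fun s => M * C * exp (2 * Lc * s))). lra.
    + apply RInt_ex. intros z. apply cpt_abs. apply continuity_pt_minus; apply hn_cont.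
    + apply RInt_ex. intros z. apply cont_of_derive with (M * C * (2 * Lc * exp (2 * Lc * z))).
      auto_derive; auto. ring.
    + intros s Hs. eapply Rle_trans. apply G_lip. rewrite Rmult_assoc. apply Rmult_le_compat_l; auto.
      apply IH. lra.
    + assert (E : RInt (fun s => M * C * exp (2 * Lc * s)) 0 t =
                 M * C * exp (2 * Lc * t) / (2 * Lc) - M * C * exp (2 * Lc * 0) / (2 * Lc)).
      { apply is_RInt_unique.
        apply (is_RInt_derive (V:=R_CompleteNormedModule) (fun s => M * C * exp (2 * Lc * s) / (2 * Lc))).
        - intros x _. auto_derive; auto. field. lra.
        - intros x _. apply continuity_pt_filterlim.
          apply cont_of_derive with (M * C * (2 * Lc * exp (2 * Lc * x))). auto_derive; auto. ring. }
      rewrite E. rewrite Rmult_0_r, exp_0.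
      replace (Bc * T * (/ 2) ^ S n) with (C / 2) by (unfold C; simpl; field).
      assert (0 < exp (2 * Lc * t)) by apply exp_pos.
      assert (HM2 : M / (2 * Lc) <= / 2).
      { apply Rmult_le_reg_r with (2 * Lc); [lra|]. unfold Rdiv. rewrite Rmult_assoc, Rinv_l by lra.
        unfold Lc; lra. }
      replace (M * C * exp (2 * Lc * t) / (2 * Lc) - M * C * 1 / (2 * Lc))
        with ((M / (2 * Lc)) * C * (exp (2 * Lc * t) - 1)) by (field; lra).
      assert (0 <= M / (2 * Lc)) by (apply Rle_mult_inv_pos; lra).
      assert (0 <= C * (exp (2 * Lc * t) - 1)).
      { apply Rmult_le_pos; auto. assert (1 <= exp (2 * Lc * t)).
        { rewrite <- exp_0. apply exp_le. nra. } lra. }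
      replace ((M / (2 * Lc)) * C * (exp (2 * Lc * t) - 1)) with ((M / (2 * Lc)) * (C * (exp (2 * Lc * t) - 1))) by ring.
      apply Rle_trans with (/2 * (C * (exp (2 * Lc * t) - 1))).
      apply Rmult_le_compat_r; auto. nra.
Qed.

Lemma Pc_diff y n t : 0 <= t <= T -> Rabs (Pc y (S n) t - Pc y n t) <= K2 * (/2) ^ n.
Proof.
  intros Ht. eapply Rle_trans. apply Pc_step; auto. unfold K2.
  replace (Bc * T * exp (2 * Lc * T) * (/ 2) ^ n) with (Bc * T * (/ 2) ^ n * exp (2 * Lc * T)) by ring.
  apply Rmult_le_compat_l.
  apply Rmult_le_pos; [apply Rmult_le_pos; [apply Bc_pos|lra] | apply pow_le; lra].
  apply exp_le. unfold Lc. nra.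
Qed.

Lemma Pc_cauchy0 y n k t : 0 <= t <= T ->
  Rabs (Pc y (n + k) t - Pc y n t) <= 2 * K2 * ((/2) ^ n - (/2) ^ (n + k)).
Proof.
  intros Ht. induction k as [|k IH].
  - rewrite Nat.add_0_r. unfold Rminus. rewrite !Rplus_opp_r, Rabs_R0. lra.
  - replace (n + S k)%nat with (S (n + k)) by lia.
    replace (Pc y (S (n + k)) t - Pc y n t) with
      ((Pc y (S (n + k)) t - Pc y (n + k) t) + (Pc y (n + k) t - Pc y n t)) by ring.
    eapply Rle_trans. apply Rabs_triang.
    pose proof (Pc_diff y (n + k) t Ht).
    simpl pow at 2. lra.
Qed.

Lemma Pc_cauchy y n m t : (n <= m)%nat -> 0 <= t <= T ->
  Rabs (Pc y m t - Pc y n t) <= 2 * K2 * (/2) ^ n.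
Proof.
  intros Hnm Ht. replace m with (n + (m - n))%nat by lia.
  eapply Rle_trans. apply Pc_cauchy0; auto.
  pose proof K2_pos. assert (0 <= (/2) ^ (n + (m - n))) by (apply pow_le; lra).
  nra.
Qed.

Definition Xl (y t : R) : R := real (Lim_seq (fun n => Pc y n (clamp 0 T t))).

Lemma Xl_lim y t : is_lim_seq (fun n => Pc y n (clamp 0 T t)) (Xl y t).
Proof.
  unfold Xl. apply Lim_seq_correct'. apply ex_lim_seq_cauchy_corr.
  intros eps. destruct (half_pow_small (4 * K2) eps (cond_pos eps)) as [N HN].
  exists N. intros n m Hn Hm.
  pose proof (Pc_cauchy y N n (clamp 0 T t) Hn (ct_in t)).
  pose proof (Pc_cauchy y N m (clamp 0 T t) Hm (ct_in t)).
  specialize (HN N (le_n N)).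
  replace (Pc y n (clamp 0 T t) - Pc y m (clamp 0 T t)) with
    ((Pc y n (clamp 0 T t) - Pc y N (clamp 0 T t)) - (Pc y m (clamp 0 T t) - Pc y N (clamp 0 T t))) by ring.
  eapply Rle_lt_trans. apply Rabs_triang. rewrite Rabs_Ropp. lra.
Qed.

Lemma Xl_bound y n t : Rabs (Xl y t - Pc y n (clamp 0 T t)) <= 2 * K2 * (/2) ^ n.
Proof.
  set (u := fun k => Rabs (Pc y (k + n) (clamp 0 T t) - Pc y n (clamp 0 T t))).
  assert (Hu : is_lim_seq u (Rabs (Xl y t - Pc y n (clamp 0 T t)))).
  { unfold u. apply (is_lim_seq_abs _ (Finite (Xl y t - Pc y n (clamp 0 T t)))).
    apply (is_lim_seq_minus' (fun k => Pc y (k + n) (clamp 0 T t)) (fun _ => Pc y n (clamp 0 T t))).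
    apply (is_lim_seq_incr_n (fun k => Pc y k (clamp 0 T t)) n). apply Xl_lim.
    apply is_lim_seq_const. }
  assert (H := is_lim_seq_le u (fun _ => 2 * K2 * (/2) ^ n) (Rabs (Xl y t - Pc y n (clamp 0 T t)))
     (2 * K2 * (/2) ^ n)).
  simpl in H. apply H; auto.
  - intros k. unfold u. apply Pc_cauchy. lia. apply ct_in.
  - apply is_lim_seq_const.
Qed.

Lemma Pc_lipS y n u v : Rabs (Pc y (S n) u - Pc y (S n) v) <= Bc * Rabs (u - v).
Proof.
  simpl. rewrite L_b.
  rewrite <- (RInt_Chasles (V:=R_CompleteNormedModule) (fun s => Gf s (Pc y n s)) 0 v u)
    by (apply RInt_ex; apply hn_cont).
  change (plus ?x ?z) with (x + z).
  rewrite L_a.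
  apply RInt_bound.
  - intros z _. apply continuity_pt_filterlim. apply hn_cont.
  - intros z _. apply G_bnd.
Qed.

Lemma Xl_lip y t t' : Rabs (Xl y t - Xl y t') <= Bc * Rabs (t - t').
Proof.
  apply (le_half_pow _ _ (4 * K2)). intros n.
  pose proof (Xl_bound y (S n) t). pose proof (Xl_bound y (S n) t').
  pose proof (Pc_lipS y n (clamp 0 T t) (clamp 0 T t')).
  assert (Rabs (clamp 0 T t - clamp 0 T t') <= Rabs (t - t')) by (apply clamp_lip; lra).
  pose proof Bc_pos. pose proof K2_pos.
  assert (Bc * Rabs (clamp 0 T t - clamp 0 T t') <= Bc * Rabs (t - t')) by (apply Rmult_le_compat_l; auto).
  assert (E : (/2) ^ S n <= (/2) ^ n) by (simpl; assert (0 <= (/2)^n) by (apply pow_le; lra); lra).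
  replace (Xl y t - Xl y t') with ((Xl y t - Pc y (S n) (clamp 0 T t)) - (Xl y t' - Pc y (S n) (clamp 0 T t'))
     + (Pc y (S n) (clamp 0 T t) - Pc y (S n) (clamp 0 T t'))) by ring.
  eapply Rle_trans. apply Rabs_triang. eapply Rle_trans. apply Rplus_le_compat_r. apply Rabs_triang.
  rewrite Rabs_Ropp.
  assert (2 * K2 * (/2) ^ S n <= 2 * K2 * (/2) ^ n) by (apply Rmult_le_compat_l; lra).
  lra.
Qed.

Lemma Xl_cont y t : continuity_pt (Xl y) t.
Proof.
  apply cpt_intro. intros eps He. pose proof Bc_pos.
  exists (eps / (Bc + 1)). split. apply Rdiv_lt_0_compat; lra.
  intros z Hz. eapply Rle_lt_trans. apply Xl_lip.
  apply Rle_lt_trans with ((Bc + 1) * Rabs (z - t)). pose proof (Rabs_pos (z - t)); nra.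
  apply Rmult_lt_reg_l with (/ (Bc + 1)). apply Rinv_0_lt_compat; lra.
  rewrite <- Rmult_assoc, Rinv_l, Rmult_1_l by lra. unfold Rdiv in Hz. lra.
Qed.

Lemma gX_cont y : forall z, continuity_pt (fun s => Gf s (Xl y s)) z.
Proof.
  intros z. apply (cpt_comp2 (fun s => s) (Xl y) Gf). apply continuity_pt_id. apply Xl_cont. apply G_cont.
Qed.

Lemma Xl_int y t : 0 <= t <= T -> Xl y t = y + RInt (fun s => Gf s (Xl y s)) 0 t.
Proof.
  intros Ht.
  assert (H : Rabs (Xl y t - (y + RInt (fun s => Gf s (Xl y s)) 0 t)) <= 0).
  { apply (le_half_pow _ _ (2 * K2 + 2 * K2 * M * T)). intros n.
    pose proof (Xl_bound y (S n) t) as B1. rewrite (clamp_id 0 T t Ht) in B1.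
    change (Pc y (S n) t) with (y + RInt (fun s => Gf s (Pc y n s)) 0 t) in B1.
    assert (B2 : Rabs (RInt (fun s => Gf s (Pc y n s)) 0 t - RInt (fun s => Gf s (Xl y s)) 0 t)
                 <= M * (2 * K2 * (/2) ^ n) * Rabs (t - 0)).
    { rewrite (RInt_minus_R _ _ 0 t (RInt_ex _ 0 t (hn_cont y n)) (RInt_ex _ 0 t (gX_cont y))).
      apply RInt_bound.
      - intros z _. apply continuity_pt_filterlim. apply continuity_pt_minus; [apply hn_cont|apply gX_cont].
      - intros z Hz. rewrite Rmin_left, Rmax_right in Hz by lra.
        eapply Rle_trans. apply G_lip. apply Rmult_le_compat_l; auto.
        rewrite Rabs_minus_sym. pose proof (Xl_bound y n z) as B. rewrite (clamp_id 0 T z) in B by lra. exact B. }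
    replace (t - 0) with t in B2 by ring. rewrite (Rabs_pos_eq t) in B2 by lra.
    assert (E : (/2) ^ S n <= (/2) ^ n) by (simpl; assert (0 <= (/2)^n) by (apply pow_le; lra); lra).
    pose proof K2_pos.
    assert (M * (2 * K2 * (/ 2) ^ n) * t <= 2 * K2 * M * T * (/2) ^ n).
    { replace (M * (2 * K2 * (/ 2) ^ n) * t) with ((2 * K2 * M * (/2) ^ n) * t) by ring.
      replace (2 * K2 * M * T * (/ 2) ^ n) with ((2 * K2 * M * (/2) ^ n) * T) by ring.
      apply Rmult_le_compat_l; [|lra]. assert (0 <= (/2) ^ n) by (apply pow_le; lra).
      apply Rmult_le_pos; [nra|auto]. }
    replace (Xl y t - (y + RInt (fun s => Gf s (Xl y s)) 0 t)) with
      ((Xl y t - (y + RInt (fun s => Gf s (Pc y n s)) 0 t)) +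
       (RInt (fun s => Gf s (Pc y n s)) 0 t - RInt (fun s => Gf s (Xl y s)) 0 t)) by ring.
    assert (2 * K2 * (/2) ^ S n <= 2 * K2 * (/2) ^ n) by (apply Rmult_le_compat_l; lra).
    eapply Rle_trans. apply Rabs_triang. lra. }
  pose proof (Rabs_pos (Xl y t - (y + RInt (fun s => Gf s (Xl y s)) 0 t))).
  assert (Rabs (Xl y t - (y + RInt (fun s => Gf s (Xl y s)) 0 t)) = 0) by lra.
  apply Rabs_eq_0 in H1. lra.
Qed.

Lemma Xl_0 y : Xl y 0 = y.
Proof. rewrite Xl_int by lra. rewrite RInt_point. change (y + zero = y). unfold zero; simpl. ring. Qed.

Lemma Xl_deriv y t : 0 < t < T -> is_derive (Xl y) t (Gf t (Xl y t)).
Proof.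
  intros Ht.
  apply (is_derive_ext_loc (fun u => y + RInt (fun s => Gf s (Xl y s)) 0 u)).
  - assert (Hd : 0 < Rmin t (T - t)) by (apply Rmin_pos; lra).
    exists (mkposreal _ Hd). intros u Hu. unfold ball in Hu; simpl in Hu.
    unfold AbsRing_ball, abs, minus, plus, opp in Hu; simpl in Hu.
    apply Rabs_def2 in Hu. assert (Rmin t (T - t) <= t) by apply Rmin_l.
    assert (Rmin t (T - t) <= T - t) by apply Rmin_r.
    symmetry. apply Xl_int. lra.
  - apply D_plus_const. apply (RInt_deriv (fun s => Gf s (Xl y s))). apply gX_cont.
Qed.

Lemma Xl_range y : -PI <= y <= PI -> forall t, 0 <= t <= T -> -PI <= Xl y t <= PI.
Proof.
  intros Hy t Ht. pose proof pi_pos.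
  assert (Hcw : forall z u, 0 <= u <= T -> cw T (fun s => Xl y s - z) u).
  { intros z u Hu. apply cw_minus. apply cw_cont. apply Xl_cont. apply cw_cont. apply continuity_pt_const. intros p q; reflexivity. }
  assert (Hgen : forall z, (forall s, Gf s z = 0) -> forall s, 0 < s < T ->
     is_derive (fun s => Xl y s - z) s
       ((if Req_EM_T (Xl y s) z then 0 else (Gf s (Xl y s) - Gf s z) / (Xl y s - z)) * (Xl y s - z))).
  { intros z Hz s Hs.
    assert (H1 := is_derive_minus (K:=R_AbsRing) (V:=R_NormedModule) (Xl y) (fun _ => z) s _ _ (Xl_deriv y s Hs)
       (is_derive_const (K:=R_AbsRing) (V:=R_NormedModule) z s)).
    eapply D_ext; [| |exact H1]. intros; reflexivity.
    change (minus ?p ?q) with (p - q). change (zero) with 0.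
    destruct (Req_EM_T (Xl y s) z) as [E|E].
    - rewrite E, Hz. ring.
    - rewrite Hz. field. lra. }
  assert (Hbd : forall z s, 0 < s < T -> Rabs (if Req_EM_T (Xl y s) z then 0 else (Gf s (Xl y s) - Gf s z) / (Xl y s - z)) <= M).
  { intros z s Hs. destruct (Req_EM_T (Xl y s) z) as [E|E].
    - rewrite Rabs_R0; auto.
    - unfold Rdiv. rewrite Rabs_mult, Rabs_inv.
      apply Rmult_le_reg_r with (Rabs (Xl y s - z)). apply Rabs_pos_lt. lra.
      rewrite Rmult_assoc, Rinv_l by (apply Rabs_no_R0; lra). rewrite Rmult_1_r.
      apply G_lip. }
  split.
  - destruct (GL T (fun s => Xl y s - (-PI)) _ M HT (Hcw (-PI)) (Hgen (-PI) G_m) (Hbd (-PI)) t Ht)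
      as [_ [_ [G3 _]]].
    rewrite Xl_0 in G3. specialize (G3 ltac:(lra)). lra.
  - destruct (GL T (fun s => Xl y s - PI) _ M HT (Hcw PI) (Hgen PI G_p) (Hbd PI) t Ht)
      as [_ [_ [_ G4]]].
    rewrite Xl_0 in G4. specialize (G4 ltac:(lra)). lra.
Qed.

Lemma Xl_char y : -PI <= y <= PI -> characteristic T a y (Xl y).
Proof.
  intros Hy. split; [apply Xl_0|split; [|split]].
  - intros t Ht. apply filterlim_of_cw. apply cw_cont. apply Xl_cont.
  - intros t Ht. apply Xl_range; auto.
  - intros t Ht. pose proof (Xl_deriv y t Ht) as D.
    unfold Gf in D. rewrite (clamp_id 0 T t) in D by lra.
    rewrite (clamp_id (-PI) PI (Xl y t)) in D by (apply Xl_range; auto; lra).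
    exact D.
Qed.

End P2.

Lemma closure_le (f : R -> R) c x : continuity_pt f x -> -PI <= x <= PI ->
  (forall z, -PI < z < PI -> f z <= c) -> f x <= c.
Proof.
  intros Hc Hx Hz. pose proof PI_RGT_0 as Hpi. apply Rnot_lt_le. intros Hlt.
  destruct (cpt_elim f x Hc (f x - c)) as [d [Hd Hd']]; [lra|].
  set (th := Rmin (d / (2 * PI)) (1/2)).
  assert (Hth : 0 < th) by (apply Rmin_pos; [apply Rdiv_lt_0_compat|]; lra).
  assert (Hth1 : th <= 1/2) by apply Rmin_r.
  assert (Hth2 : th * (2 * PI) <= d).
  { assert (th <= d / (2 * PI)) by apply Rmin_l.
    apply Rmult_le_compat_r with (r := 2 * PI) in H; [|lra].
    replace (d / (2 * PI) * (2 * PI)) with d in H by (field; lra). lra. }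
  set (z := (1 - th) * x).
  assert (Hzx : Rabs (z - x) < d).
  { unfold z. replace ((1 - th) * x - x) with (- (th * x)) by ring. rewrite Rabs_Ropp, Rabs_mult.
    rewrite (Rabs_pos_eq th) by lra. assert (Rabs x <= PI) by (apply Rabs_le; lra). nra. }
  assert (Hzi : -PI < z < PI) by (unfold z; split; nra).
  specialize (Hd' z Hzx). specialize (Hz z Hzi). apply Rabs_def2 in Hd'. lra.
Qed.

Lemma field_aux1 : forall p q u v w : R, p <> 0 -> (u + v) * q * / (p*p) + q * (- / (p*p*(p*p)) * (w * p + p * w))
                = (u + v - 2 * (w / p)) * (q / (p*p)).
Proof. intros. field. auto. Qed.

Lemma field_aux2 (I p c : R) : p <> 0 -> I / p - c = (I - p * c) / p.
Proof. intros. field. auto. Qed.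

Section P3.
Variables (T : R) (a : R -> R -> R).
Hypothesis HT : 0 < T.
Hypothesis HC : C2_on_rect T a.
Hypothesis HS : solves_eq T a.
Variable M : R.
Hypothesis HM0 : 0 <= M.
Hypothesis HM : forall t x, in_rect T t x -> Rabs (a t x) <= M.
Variables (x0 : R) (xs : R -> R).
Hypothesis Hx0 : -PI < x0 < PI.
Hypothesis Hmax : max_at a 0 x0.
Hypothesis Cxs : characteristic T a x0 xs.

Lemma xs_int t : 0 <= t <= T -> -PI < xs t < PI.
Proof. intros Ht. apply (char_interior T a HT HC HS M HM0 HM xs x0 Cxs Hx0 t Ht). Qed.

Definition Phi (t u : R) := Xl T a (clamp (-PI) PI u) t.

Lemma Phi_char u : characteristic T a (clamp (-PI) PI u) (Xl T a (clamp (-PI) PI u)).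
Proof. apply (Xl_char T a HT HC HS M HM0 HM). apply cx_in. Qed.

Lemma Phi_cont t : 0 <= t <= T -> continuity (Phi t).
Proof.
  intros Ht u. apply cpt_intro. intros eps He.
  set (E := exp (M * T)).
  assert (HE : 0 < E) by apply exp_pos.
  exists (eps / E). split. apply Rdiv_lt_0_compat; auto.
  intros v Hv. unfold Phi.
  destruct (char_diff T a HT HC M HM0 HM _ _ _ _ (Phi_char v) (Phi_char u) t Ht) as [A _].
  eapply Rle_lt_trans. exact A.
  assert (Rabs (clamp (- PI) PI v - clamp (- PI) PI u) <= Rabs (v - u)) by (apply clamp_lip; pose proof PI_RGT_0; lra).
  assert (exp (M * t) <= E) by (apply exp_le; nra).
  assert (Rabs (v - u) * E < eps).
  { apply Rmult_lt_reg_r with (/ E). apply Rinv_0_lt_compat; auto.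
    rewrite Rmult_assoc, Rinv_r, Rmult_1_r by lra. exact Hv. }
  pose proof (Rabs_pos (clamp (- PI) PI v - clamp (- PI) PI u)). pose proof (Rabs_pos (v - u)).
  assert (Rabs (clamp (- PI) PI v - clamp (- PI) PI u) * exp (M * t) <= Rabs (v - u) * E).
  { apply Rmult_le_compat; auto. left; apply exp_pos. }
  lra.
Qed.

Lemma max_claim t : 0 <= t <= T -> max_at a t (xs t).
Proof.
  intros Ht. pose proof PI_RGT_0 as Hpi.
  assert (Hint : forall x, -PI < x < PI -> a t x <= a t (xs t)).
  { intros x Hx.
    assert (Pm : Phi t (-PI) = -PI).
    { unfold Phi. rewrite (clamp_id (-PI) PI (-PI)) by lra.
      apply (char_bnd_m T a HT HC M HM0 HM). apply (Xl_char T a HT HC HS M HM0 HM). lra. auto. }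
    assert (Pp : Phi t PI = PI).
    { unfold Phi. rewrite (clamp_id (-PI) PI PI) by lra.
      apply (char_bnd_p T a HT HC HS M HM0 HM). apply (Xl_char T a HT HC HS M HM0 HM). lra. auto. }
    destruct (IVT_gen (Phi t) (-PI) PI x (Phi_cont t Ht)) as [u [Hu Hux]].
    { rewrite Pm, Pp. rewrite Rmin_left, Rmax_right by lra. lra. }
    rewrite Rmin_left, Rmax_right in Hu by lra.
    assert (Hu' : -PI < u < PI).
    { split; [destruct (Req_dec u (-PI)) as [E|E]|destruct (Req_dec u PI) as [E|E]]; try lra.
      - rewrite E, Pm in Hux. lra.
      - rewrite E, Pp in Hux. lra. }
    unfold Phi in Hux. rewrite (clamp_id (-PI) PI u) in Hux by lra.
    rewrite <- Hux.
    apply (w_compare T a HT HC HS M HM0 HM (Xl T a u) xs u x0); auto;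
    try (apply (Xl_char T a HT HC HS M HM0 HM); lra);
    try (apply Hmax; lra). }
  intros x Hx. apply closure_le; auto.
  apply continuity_pt_filterlim. apply (a_cont_x T a HC). split; auto.
Qed.

Lemma dx_zero t : 0 <= t <= T -> dX a t (xs t) = 0.
Proof.
  intros Ht. pose proof (xs_int t Ht) as Hi.
  assert (Ex : ex_derive (fun y => a t y) (xs t)) by (apply (C1a T a HC); split; [auto|lra]).
  unfold dX. transitivity (derive_pt (fun y => a t y) (xs t) (ex_derive_Reals_0 _ _ Ex)).
  symmetry. apply Derive_Reals.
  apply (deriv_maximum _ (-PI) PI); try lra.
  intros x H1 H2. apply (max_claim t Ht). lra.
Qed.

Lemma taylor_at t c : 0 <= t <= T -> -PI < c < PI -> dX a t c = 0 ->
  forall eps, 0 < eps -> exists del, 0 < del /\ forall h, h <> 0 -> Rabs h < del ->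
    Rabs ((a t (c + h) - a t c) / (h * h) - dX (dX a) t c / 2) <= eps.
Proof.
  intros Ht Hc H0 eps He.
  assert (Hr : 0 < Rmin (c + PI) (PI - c)) by (apply Rmin_pos; lra).
  assert (E1 : forall z, Rabs (z - c) < Rmin (c + PI) (PI - c) -> ex_derive (fun z => a t z) z).
  { intros z Hz. apply Rabs_def2 in Hz.
    assert (Rmin (c + PI) (PI - c) <= c + PI) by apply Rmin_l.
    assert (Rmin (c + PI) (PI - c) <= PI - c) by apply Rmin_r.
    assert (Hr' : in_rect T t z) by (split; [auto|lra]).
    exact (proj1 (C1a T a HC t z Hr')). }
  assert (E2 : ex_derive (Derive (fun z => a t z)) c).
  { destruct HC as [_ [H1 _]]. destruct (H1 t c) as [E _]. split; [auto|lra]. exact E. }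
  destruct (taylor2 (fun z => a t z) c _ Hr E1 E2 H0 eps He) as [d [Hd Hd']].
  exists d. split; auto.
Qed.

Lemma ratio_gl (Y : R -> R) (y eps del : R) :
  characteristic T a y Y -> -PI < y < PI -> y <> x0 -> 0 < eps ->
  (forall s z1 z2, 0 <= s <= T -> -PI <= z1 <= PI -> -PI <= z2 <= PI -> Rabs (z1 - z2) < del ->
     Rabs (a s z1 - a s z2) <= eps) ->
  (forall s, 0 <= s <= T -> Rabs (Y s - xs s) < del) ->
  forall t, 0 <= t <= T ->
    Rabs ((a t (Y t) - a t (xs t)) / ((Y t - xs t) * (Y t - xs t)) -
          (a 0 (Y 0) - a 0 (xs 0)) / ((Y 0 - xs 0) * (Y 0 - xs 0)))
    <= Rabs ((a 0 (Y 0) - a 0 (xs 0)) / ((Y 0 - xs 0) * (Y 0 - xs 0))) * (exp (3 * eps * T) - 1).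
Proof.
  intros CY Hy Hyx He Huc Hdel t Ht.
  set (D := fun s => Y s - xs s).
  set (d := fun s => a s (Y s) - a s (xs s)).
  set (cD := fun s => (F a s (Y s) - F a s (xs s)) / D s).
  set (cR := fun s => (a s (Y s) + a s (xs s)) - 2 * cD s).
  assert (Dne : forall s, 0 <= s <= T -> D s <> 0).
  { intros s Hs. destruct (char_diff T a HT HC M HM0 HM Y xs y x0 CY Cxs s Hs) as [_ B].
    assert (0 < Rabs (y - x0) * exp (- (M * s))).
    { apply Rmult_lt_0_compat. apply Rabs_pos_lt. lra. apply exp_pos. }
    intros E. unfold D in E. rewrite E, Rabs_R0 in B. lra. }
  assert (RY := char_range T a Y y CY). assert (Rx := char_range T a xs x0 Cxs).
  destruct (GL_abs T (fun s => d s / (D s * D s)) cR (3 * eps) HT) with (t := t) as [_ [_ G3]]; auto.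
  - lra.
  - intros u Hu. unfold Rdiv. apply cw_mult.
    + apply cw_minus; [apply (w_cw T a HC Y y)|apply (w_cw T a HC xs x0)]; auto.
    + apply cw_comp1 with (h := fun z => / z).
      apply cw_mult; apply cw_minus; [apply (char_cw T a Y y)|apply (char_cw T a xs x0)|
         apply (char_cw T a Y y)|apply (char_cw T a xs x0)]; auto.
      apply (continuity_pt_inv (fun z => z)). apply continuity_pt_id.
      specialize (Dne u Hu). unfold D in Dne. apply Rmult_integral_contrapositive; auto.
  - intros s Hs. assert (Hs' : 0 <= s <= T) by lra. specialize (Dne s Hs').
    assert (Hd : is_derive d s ((a s (Y s) + a s (xs s)) * d s)).
    { assert (H := is_derive_minus (K:=R_AbsRing) (V:=R_NormedModule) _ _ s _ _
        (w_deriv T a HT HC HS M HM0 HM Y y s CY Hy Hs) (w_deriv T a HT HC HS M HM0 HM xs x0 s Cxs Hx0 Hs)).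
      eapply D_ext; [| |exact H]. intros; reflexivity.
      change (minus ?p ?q) with (p - q). unfold d. ring. }
    assert (HD : is_derive D s (F a s (Y s) - F a s (xs s))).
    { destruct CY as [_ [_ [_ DY]]]. destruct Cxs as [_ [_ [_ Dx]]].
      exact (is_derive_minus (K:=R_AbsRing) (V:=R_NormedModule) Y xs s _ _ (DY s Hs) (Dx s Hs)). }
    assert (HDD := D_mult D D s _ _ HD HD).
    assert (Hinv : is_derive (fun z => / z) (D s * D s) (- / ((D s * D s) * (D s * D s)))).
    { auto_derive. apply Rmult_integral_contrapositive; split; auto. ring. }
    assert (HI := D_comp (fun z => / z) (fun s => D s * D s) s _ _ Hinv HDD).
    assert (HR := D_mult d (fun s => / (D s * D s)) s _ _ Hd HI).
    eapply D_ext; [| |exact HR]. intros; reflexivity.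
    unfold cR, cD.
    apply field_aux1; auto.
  - intros s Hs. assert (Hs' : 0 <= s <= T) by lra. specialize (Dne s Hs').
    specialize (Hdel s Hs').
    assert (A1 : Rabs (a s (Y s) - a s (xs s)) <= eps) by (apply Huc; auto).
    assert (A2 : Rabs (cD s - a s (xs s)) <= eps).
    { unfold cD. rewrite (F_diff T a HC s (xs s) (Y s)) by auto.
      assert (B := RInt_approx (fun z => a s z) (xs s) (Y s) (a s (xs s)) eps).
      assert (Hseg : forall z, Rmin (xs s) (Y s) <= z <= Rmax (xs s) (Y s) ->
                 -PI <= z <= PI /\ Rabs (z - xs s) < del).
      { intros z Hz. specialize (RY s Hs'). specialize (Rx s Hs').
        unfold Rmin, Rmax in Hz. destruct (Rle_dec (xs s) (Y s)); split; try lra;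
        apply Rabs_def1; apply Rabs_def2 in Hdel; lra. }
      specialize (B ltac:(intros z Hz; apply (a_cont_x T a HC); split; [auto|apply Hseg; auto])
                    ltac:(intros z Hz; apply Huc; auto; [apply Hseg; auto|apply Hseg; auto])).
      rewrite (field_aux2 _ (D s) _ Dne).
      unfold Rdiv. rewrite Rabs_mult, Rabs_inv.
      apply Rmult_le_reg_r with (Rabs (D s)). apply Rabs_pos_lt; auto.
      rewrite Rmult_assoc, Rinv_l by (apply Rabs_no_R0; auto). rewrite Rmult_1_r.
      unfold D. exact B. }
    unfold cR. replace (a s (Y s) + a s (xs s) - 2 * cD s) with
      ((a s (Y s) - a s (xs s)) - 2 * (cD s - a s (xs s))) by ring.
    eapply Rle_trans. apply Rabs_triang. rewrite Rabs_Ropp, Rabs_mult, (Rabs_pos_eq 2) by lra. lra.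
Qed.

Lemma exp_cont0 : continuity_pt exp 0.
Proof. apply cont_of_derive with (exp 0). auto_derive; auto. ring. Qed.

Lemma second_claim t : 0 <= t <= T -> dX (dX a) t (xs t) = dX (dX a) 0 x0.
Proof.
  intros Ht. pose proof PI_RGT_0 as Hpi.
  set (L0 := dX (dX a) 0 x0). set (Lt := dX (dX a) t (xs t)).
  assert (Hxs0 : xs 0 = x0) by (destruct Cxs; auto).
  assert (Hd0 : dX a 0 x0 = 0) by (rewrite <- Hxs0; apply dx_zero; lra).
  assert (Hdt : dX a t (xs t) = 0) by (apply dx_zero; auto).
  pose proof (xs_int t Ht) as Hxt.
  assert (Main : forall z, 0 < z -> Rabs (Lt - L0) <= z).
  { intros z Hz.
    pose proof (Rabs_pos L0).
    set (kap := z / (4 * (Rabs L0 / 2 + 1))).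
    assert (Hk : 0 < kap) by (apply Rdiv_lt_0_compat; lra).
    destruct (cpt_elim exp 0 exp_cont0 kap Hk) as [de [Hde Hde']].
    set (eta := Rmin (Rmin 1 (z / 8)) (de / (3 * T + 1))).
    assert (He1 : eta <= 1) by (unfold eta; eapply Rle_trans; apply Rmin_l).
    assert (He2 : eta <= z / 8) by (unfold eta; eapply Rle_trans; [apply Rmin_l|apply Rmin_r]).
    assert (He3 : eta <= de / (3 * T + 1)) by (unfold eta; apply Rmin_r).
    assert (Heta : 0 < eta).
    { unfold eta. repeat apply Rmin_pos; try lra; apply Rdiv_lt_0_compat; lra. }
    assert (Hexp : 0 <= exp (3 * eta * T) - 1 <= kap).
    { split.
      - assert (1 <= exp (3 * eta * T)) by (rewrite <- exp_0; apply exp_le; nra). lra.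
      - assert (H3 : Rabs (3 * eta * T - 0) < de).
        { rewrite Rminus_0_r, Rabs_pos_eq by nra.
          apply Rmult_le_compat_l with (r := 3 * T) in He3; [|lra].
          assert (3 * T * (de / (3 * T + 1)) < de).
          { replace (3 * T * (de / (3 * T + 1))) with (de * (3 * T / (3 * T + 1))) by (field; lra).
            assert (3 * T / (3 * T + 1) < 1).
            { apply Rmult_lt_reg_r with (3 * T + 1); [lra|]. unfold Rdiv.
              rewrite Rmult_assoc, Rinv_l by lra. lra. }
            nra. }
          lra. }
        specialize (Hde' _ H3). rewrite exp_0 in Hde'. apply Rabs_def2 in Hde'. lra. }
    destruct (uc T a HC eta Heta) as [du [Hdu Huc]].
    destruct (taylor_at 0 x0 ltac:(lra) Hx0 Hd0 eta Heta) as [d0 [Hd0p Hd0']].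
    destruct (taylor_at t (xs t) Ht Hxt Hdt eta Heta) as [dt [Hdtp Hdt']].
    set (E := exp (M * T)). assert (HE : 0 < E) by apply exp_pos.
    set (r0 := Rmin (x0 + PI) (PI - x0)).
    assert (Hr0 : 0 < r0) by (apply Rmin_pos; lra).
    set (m1 := Rmin du dt).
    assert (Hm1 : 0 < m1) by (apply Rmin_pos; lra).
    set (h := Rmin (Rmin (m1 / E) d0) r0 / 2).
    assert (Hh0 : 0 < h) by (unfold h; apply Rdiv_lt_0_compat; [repeat apply Rmin_pos; try apply Rdiv_lt_0_compat; lra|lra]).
    assert (Hh1 : h < m1 / E).
    { unfold h. assert (Rmin (Rmin (m1 / E) d0) r0 <= m1 / E) by (eapply Rle_trans; apply Rmin_l).
      assert (0 < m1 / E) by (apply Rdiv_lt_0_compat; lra). lra. }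
    assert (Hh2 : h < d0).
    { unfold h. assert (Rmin (Rmin (m1 / E) d0) r0 <= d0) by (eapply Rle_trans; [apply Rmin_l|apply Rmin_r]). lra. }
    assert (Hh3 : h < r0).
    { unfold h. assert (Rmin (Rmin (m1 / E) d0) r0 <= r0) by apply Rmin_r. lra. }
    assert (Hr01 : r0 <= PI - x0) by apply Rmin_r.
    set (y := x0 + h).
    assert (Hy : -PI < y < PI) by (unfold y; lra).
    assert (Hyx : y <> x0) by (unfold y; lra).
    set (Y := Xl T a y).
    assert (CY : characteristic T a y Y) by (apply (Xl_char T a HT HC HS M HM0 HM); lra).
    assert (HYd : forall s, 0 <= s <= T -> Rabs (Y s - xs s) < m1).
    { intros s Hs. destruct (char_diff T a HT HC M HM0 HM Y xs y x0 CY Cxs s Hs) as [A _].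
      eapply Rle_lt_trans. exact A. unfold y. replace (x0 + h - x0) with h by ring.
      rewrite Rabs_pos_eq by lra.
      assert (exp (M * s) <= E) by (apply exp_le; nra).
      apply Rle_lt_trans with (h * E). apply Rmult_le_compat_l; lra.
      apply Rmult_lt_reg_r with (/ E). apply Rinv_0_lt_compat; auto.
      rewrite Rmult_assoc, Rinv_r, Rmult_1_r by lra. exact Hh1. }
    assert (Huc' : forall s z1 z2, 0 <= s <= T -> -PI <= z1 <= PI -> -PI <= z2 <= PI ->
        Rabs (z1 - z2) < du -> Rabs (a s z1 - a s z2) <= eta).
    { intros s z1 z2 Hs Hz1 Hz2 Hzz. left.
      apply Huc; [split; auto|split; auto|unfold Rminus; rewrite Rplus_opp_r, Rabs_R0; auto|auto]. }
    assert (G := ratio_gl Y y eta du CY Hy Hyx Heta Huc'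
      ltac:(intros s Hs; eapply Rlt_le_trans; [apply HYd; auto|apply Rmin_l]) t Ht).
    assert (HY0 : Y 0 = y) by (destruct CY; auto).
    rewrite HY0, Hxs0 in G. unfold y in G. replace (x0 + h - x0) with h in G by ring.
    set (R0 := (a 0 (x0 + h) - a 0 x0) / (h * h)) in *.
    set (h' := Y t - xs t) in *.
    assert (Hh' : h' <> 0).
    { destruct (char_diff T a HT HC M HM0 HM Y xs y x0 CY Cxs t Ht) as [_ B].
      assert (0 < Rabs (y - x0) * exp (- (M * t))).
      { apply Rmult_lt_0_compat. apply Rabs_pos_lt. lra. apply exp_pos. }
      intros Eq. unfold h' in Eq. rewrite Eq, Rabs_R0 in B. lra. }
    assert (T0 := Hd0' h ltac:(lra) ltac:(rewrite Rabs_pos_eq; lra)). fold L0 R0 in T0.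
    assert (Tt := Hdt' h' Hh' ltac:(eapply Rlt_le_trans; [apply HYd; auto|apply Rmin_r])).
    replace (xs t + h') with (Y t) in Tt by (unfold h'; ring). fold Lt in Tt.
    set (Rt := (a t (Y t) - a t (xs t)) / (h' * h')) in *.
    assert (HR0 : Rabs R0 <= Rabs L0 / 2 + 1).
    { pose proof (Rabs_triang (R0 - L0 / 2) (L0 / 2)) as Htr.
      replace (R0 - L0 / 2 + L0 / 2) with R0 in Htr by ring.
      assert (Rabs (L0 / 2) = Rabs L0 / 2).
      { unfold Rdiv. rewrite Rabs_mult, (Rabs_pos_eq (/ 2)) by lra. auto. }
      lra. }
    assert (HG : Rabs (Rt - R0) <= z / 4).
    { eapply Rle_trans; [exact G|].
      apply Rle_trans with ((Rabs L0 / 2 + 1) * kap).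
      apply Rmult_le_compat; try lra; apply Rabs_pos.
      unfold kap. right. field. lra. }
    replace (Lt - L0) with (2 * ((Rt - R0) - (Rt - Lt / 2) + (R0 - L0 / 2))) by field.
    rewrite Rabs_mult, (Rabs_pos_eq 2) by lra.
    pose proof (Rabs_triang ((Rt - R0) - (Rt - Lt / 2)) (R0 - L0 / 2)).
    pose proof (Rabs_triang (Rt - R0) (- (Rt - Lt / 2))). rewrite Rabs_Ropp in H1.
    replace (Rt - R0 + - (Rt - Lt / 2)) with (Rt - R0 - (Rt - Lt / 2)) in H1 by ring. lra. }
  destruct (Req_dec Lt L0) as [E|E]; auto.
  exfalso. assert (P : 0 < Rabs (Lt - L0)) by (apply Rabs_pos_lt; lra).
  specialize (Main _ (ltac:(lra) : 0 < Rabs (Lt - L0) / 2)). lra.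
Qed.

End P3.


Theorem corollary2p6 (T : R) (a : R -> R -> R) (x0 : R) :
  0 < T ->
  C2_on_rect T a ->
  solves_eq T a ->
  - PI < x0 < PI ->
  max_at a 0 x0 ->
  (exists xs, characteristic T a x0 xs) /\
  (forall xs, characteristic T a x0 xs ->
     forall t, 0 <= t <= T ->
       max_at a t (xs t) /\
       dX a t (xs t) = 0 /\
       dX (dX a) t (xs t) = dX (dX a) 0 x0).
Proof.
  intros HT HC HS Hx0 Hmax.
  destruct (bound T a HT HC) as [M [HM0 HM]].
  split.
  - exists (Xl T a x0). apply (Xl_char T a HT HC HS M HM0 HM). lra.
  - intros xs Cxs t Ht. split; [|split].
    + exact (max_claim T a HT HC HS M HM0 HM x0 xs Hx0 Hmax Cxs t Ht).
    + exact (dx_zero T a HT HC HS M HM0 HM x0 xs Hx0 Hmax Cxs t Ht).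
    + exact (second_claim T a HT HC HS M HM0 HM x0 xs Hx0 Hmax Cxs t Ht).
Qed.
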